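(* Let $H(q,p,t)$, $q,p\in\mathbb{R}^n$, be of class $C^3$ and consider $\dot q_i=\partial H/\partial p_i$, $\dot p_i=-\partial H/\partial q_i$. Fix $h>0$, $t_0$ and $a\in\mathbb{R}$. Given $(\alpha,\beta)\in\mathbb{R}^{2n}$ define $(q,p)$ and then $(Q,P)$ by $$q_i=\alpha_i+\tfrac h2\frac{\partial H}{\partial p_i}(q,\beta,t_0+ah),\qquad p_i=\beta_i-\tfrac h2\frac{\partial H}{\partial q_i}(q,\beta,t_0+ah),$$ $$P_i=p_i-\tfrac h2\frac{\partial H}{\partial q_i}(q,P,t_0+(1-a)h),\qquad Q_i=q_i+\tfrac h2\frac{\partial H}{\partial p_i}(q,P,t_0+(1-a)h),$$ where the equations for $q$ and for $P$ are implicit. (i) On any open set where these implicit equations define $q$ and $P$ as $C^1$ functions, the map $(\alpha,\beta)\mapsto(Q,P)$ is a contact (canonical) transformation: $\sum_i dP_i\wedge dQ_i=\sum_i d\beta_i\wedge d\alpha_i$. (ii) Taking for small $h$ the solutions of the implicit equations near $\alpha$ and $\beta$, and letting $(q(t),p(t))$ be the exact solution with $q(t_0)=\alpha$, $p(t_0)=\beta$, one has $Q-q(t_0+h)=O(h^3)$ and $P-p(t_0+h)=O(h^3)$; i.e. the method is of second order. *)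

(* Defs.v *)
From HB Require Import structures.
From mathcomp Require Import all_boot.
From Stdlib Require Import Reals.

Set Implicit Arguments.
Unset Strict Implicit.
Unset Printing Implicit Defensive.

Local Open Scope R_scope.

Definition vec (n : nat) := 'I_n -> R.

Definition upd (n : nat) (x : vec n) (j : 'I_n) (s : R) : vec n :=
  fun k => if k == j then s else x k.

Definition vball (n : nat) (x : vec n) (d : R) (y : vec n) : Prop :=
  forall j, Rabs (y j - x j) < d.

Definition is_open (n : nat) (U : vec n -> Prop) : Prop :=
  forall x, U x -> exists d, 0 < d /\ forall y, vball x d y -> U y.

Definition cont_on (n : nat) (U : vec n -> Prop) (g : vec n -> R) : Prop :=
  forall x, U x -> forall eps, 0 < eps ->
    exists d, 0 < d /\ forall y, U y -> vball x d y -> Rabs (g y - g x) < eps.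

Definition partial_on (n : nat) (U : vec n -> Prop) (g : vec n -> R)
    (j : 'I_n) (dg : vec n -> R) : Prop :=
  forall x, U x -> derivable_pt_lim (fun s => g (upd x j s)) (x j) (dg x).

Fixpoint Ck_on (n : nat) (U : vec n -> Prop) (k : nat) (g : vec n -> R)
    {struct k} : Prop :=
  match k with
  | O => cont_on U g
  | S k' => cont_on U g /\
      forall j, exists dg, partial_on U g j dg /\ Ck_on U k' dg
  end.

Definition everywhere (n : nat) : vec n -> Prop := fun _ => True.

Definition Hpack (n : nat) (H : vec n -> vec n -> R -> R) : vec (n + n + 1) -> R :=
  fun z => H (fun i => z (lshift 1 (lshift n i)))
             (fun i => z (lshift 1 (rshift n i)))
             (z (rshift (n + n) ord0)).

(* splitting (alpha, beta) in R^(2n) *)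
Definition fst_half (n : nat) (z : vec (n + n)) : vec n := fun i => z (lshift n i).
Definition snd_half (n : nat) (z : vec (n + n)) : vec n := fun i => z (rshift n i).

Definition dirder (N : nat) (g : vec N -> R) (x u : vec N) (l : R) : Prop :=
  derivable_pt_lim (fun s => g (fun k => x k + s * u k)) 0 l.

Definition rsum (n : nat) (f : 'I_n -> R) : R := \big[Rplus/0]_(i < n) f i.

(* The scheme.  Hq, Hp : partial derivatives of H w.r.t. q_i and p_i. *)
Section Scheme.
Variables (n : nat) (Hq Hp : vec n -> vec n -> R -> vec n).
Variables (h t0 a : R) (alpha beta : vec n).

Definition step_p (q : vec n) : vec n :=
  fun i => beta i - h / 2 * Hq q beta (t0 + a * h) i.

Definition step_Q (q P : vec n) : vec n :=
  fun i => q i + h / 2 * Hp q P (t0 + (1 - a) * h) i.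

Definition step_eqs (q P : vec n) : Prop :=
  (forall i, q i = alpha i + h / 2 * Hp q beta (t0 + a * h) i) /\
  (forall i, P i = step_p q i - h / 2 * Hq q P (t0 + (1 - a) * h) i).
End Scheme.

(* Main.v *)
Require Import Defs.
From HB Require Import structures.
From mathcomp Require Import all_boot.
From Stdlib Require Import Reals Lra Lia Psatz ClassicalEpsilon FunctionalExtensionality.
Local Open Scope R_scope.

HB.instance Definition _ := Monoid.isComLaw.Build R 0 Rplus (fun x y z => esym (Rplus_assoc x y z)) Rplus_comm Rplus_0_l.

Lemma rsum_ext N (F G : 'I_N -> R) : (forall i, F i = G i) -> rsum F = rsum G.
Proof. move=> e; rewrite /rsum; apply: eq_bigr => i _; exact: e. Qed.

Lemma rsum_plus N (F G : 'I_N -> R) : rsum (fun i => F i + G i) = rsum F + rsum G.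
Proof. by rewrite /rsum big_split. Qed.

Lemma rsum0 N : rsum (fun _ : 'I_N => 0) = 0.
Proof. by rewrite /rsum big1. Qed.

Lemma rsum_scal N c (F : 'I_N -> R) : rsum (fun i => c * F i) = c * rsum F.
Proof.
rewrite /rsum; apply: (big_rec2 (fun x y => x = c * y)); first ring.
by move=> i x y _ ->; ring.
Qed.

Lemma rsum_opp N (F : 'I_N -> R) : rsum (fun i => - F i) = - rsum F.
Proof. rewrite (@rsum_ext N (fun i => - F i) (fun i => (-1) * F i)); [rewrite rsum_scal; ring| move=> i; ring]. Qed.

Lemma rsum_minus N (F G : 'I_N -> R) : rsum (fun i => F i - G i) = rsum F - rsum G.
Proof. rewrite /Rminus -rsum_opp -rsum_plus; apply rsum_ext => i; ring. Qed.

Lemma rsum_abs N (F : 'I_N -> R) : Rabs (rsum F) <= rsum (fun i => Rabs (F i)).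
Proof.
rewrite /rsum; apply: (big_rec2 (fun x y => Rabs x <= y)); first by rewrite Rabs_R0; lra.
move=> i x y _ h; eapply Rle_trans; first exact: Rabs_triang. lra.
Qed.

Lemma rsum_le N (F G : 'I_N -> R) : (forall i, F i <= G i) -> rsum F <= rsum G.
Proof.
move=> e; rewrite /rsum; apply: (big_rec2 (fun x y => x <= y)); first lra.
move=> i x y _ h; have := e i; lra.
Qed.

Lemma rsum_const N c : rsum (fun _ : 'I_N => c) = INR N * c.
Proof.
rewrite /rsum; elim: N => [|N IH]; first by rewrite big_ord0 /=; ring.
rewrite S_INR big_ord_recr /= IH; ring.
Qed.

Lemma rsum_le_const N (F : 'I_N -> R) c : (forall i, F i <= c) -> rsum F <= INR N * c.
Proof. move=> e; rewrite -rsum_const; exact: rsum_le. Qed.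

Lemma rsum_exchange N M (F : 'I_N -> 'I_M -> R) :
  rsum (fun i => rsum (fun j => F i j)) = rsum (fun j => rsum (fun i => F i j)).
Proof. by rewrite /rsum exchange_big. Qed.

Lemma rsum_split N M (F : 'I_(N + M) -> R) :
  rsum F = rsum (fun i => F (lshift M i)) + rsum (fun i => F (rshift N i)).
Proof. by rewrite /rsum big_split_ord. Qed.

Lemma rsum_delta N (j : 'I_N) (F : 'I_N -> R) :
  rsum (fun i => if i == j then F i else 0) = F j.
Proof.
rewrite /rsum (bigD1 j) //= eqxx big1 /=; first ring.
by move=> i /negbTE ->.
Qed.
Definition cball {N} (c : vec N) (d : R) (y : vec N) : Prop :=
  forall j, Rabs (y j - c j) <= d.

Lemma fin_min (I : finType) (P : I -> R -> Prop) :
  (forall i d d', 0 < d' <= d -> P i d -> P i d') ->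
  (forall i, exists d, 0 < d /\ P i d) -> exists d, 0 < d /\ forall i, P i d.
Proof.
move=> mono ex.
suff: forall s : seq I, exists d, 0 < d /\ forall i, i \in s -> P i d.
  by case/(_ (enum I)) => d [d0 H]; exists d; split => // i; apply: H; rewrite mem_enum.
elim=> [|a s [d [d0 IH]]]; first by exists 1; split => //; lra.
have [da [da0 Pa]] := ex a.
exists (Rmin d da); split; first exact: Rmin_glb_lt.
move=> i; rewrite in_cons => /orP [/eqP -> | /IH Hi].
- apply: mono Pa; split; [exact: Rmin_glb_lt | exact: Rmin_r].
- apply: mono Hi; split; [exact: Rmin_glb_lt | exact: Rmin_l].
Qed.

Lemma fin_max (I : finType) (P : I -> R -> Prop) :
  (forall i B B', B <= B' -> P i B -> P i B') ->
  (forall i, exists B, P i B) -> exists B, forall i, P i B.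
Proof.
move=> mono ex.
suff: forall s : seq I, exists B, forall i, i \in s -> P i B.
  by case/(_ (enum I)) => B H; exists B => i; apply: H; rewrite mem_enum.
elim=> [|a s [B IH]]; first by exists 0.
have [Ba Pa] := ex a.
exists (Rmax B Ba) => i; rewrite in_cons => /orP [/eqP -> | /IH Hi].
- apply: mono Pa; exact: Rmax_r.
- apply: mono Hi; exact: Rmax_l.
Qed.

Lemma mvi (phi phi' : R -> R) a b K : a <= b ->
  (forall s, a <= s <= b -> derivable_pt_lim phi s (phi' s)) ->
  (forall s, a <= s <= b -> Rabs (phi' s) <= K) ->
  Rabs (phi b - phi a) <= K * (b - a).
Proof.
move=> ab hd hb; case: (Req_dec a b) => [<-|ne].
  rewrite Rminus_diag Rabs_R0; lra.
have [c [e [c1 c2]]] := MVT_cor2 phi phi' a b ltac:(lra) hd.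
rewrite e Rabs_mult (Rabs_right (b - a)); last lra.
apply: Rmult_le_compat_r; first lra. apply: hb; lra.
Qed.

Lemma upd_same N (x : vec N) j s : upd x j s j = s.
Proof. by rewrite /upd eqxx. Qed.

Lemma upd_other N (x : vec N) j s k : k != j -> upd x j s k = x k.
Proof. by rewrite /upd => /negbTE ->. Qed.

Lemma upd_upd N (x : vec N) j s s' : upd (upd x j s) j s' = upd x j s'.
Proof. apply: functional_extensionality => k; rewrite /upd; by case: (k == j). Qed.

Lemma upd_id N (x : vec N) j : upd x j (x j) = x.
Proof. apply: functional_extensionality => k; rewrite /upd; by case: eqP => [->|]. Qed.

Lemma coord_step N (g : vec N -> R) (D : vec N -> R) k c d kap eps :
  (forall y, cball c d y -> derivable_pt_lim (fun s => g (upd y k s)) (y k) (D y)) ->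
  (forall y, cball c d y -> Rabs (D y - kap) <= eps) ->
  forall y s, cball c d y -> Rabs (s - c k) <= d ->
  Rabs (g (upd y k s) - g y - kap * (s - y k)) <= eps * Rabs (s - y k).
Proof.
move=> hd hb y s hy hs.
set phi := fun sg => g (upd y k sg) - kap * sg.
have inb : forall sg, Rmin (y k) s <= sg <= Rmax (y k) s -> cball c d (upd y k sg).
  move=> sg hsg j; rewrite /upd; case: eqP => [->|_]; last exact: hy.
  have := hy k; move: hsg; rewrite /Rmin /Rmax.
  case: Rle_dec => _; move=> [h1 h2]; move: hs;
   rewrite /Rabs; repeat case: Rcase_abs; lra.
have dphi : forall sg, Rmin (y k) s <= sg <= Rmax (y k) s ->
   derivable_pt_lim phi sg (D (upd y k sg) - kap).
  move=> sg hsg.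
  have h := hd _ (inb _ hsg). rewrite upd_same in h.
  have e : (fun s0 => g (upd (upd y k sg) k s0)) = (fun s0 => g (upd y k s0)).
    by apply: functional_extensionality => s0; rewrite upd_upd.
  rewrite e in h.
  have h2 := derivable_pt_lim_minus _ _ _ _ _ h (derivable_pt_lim_scal id kap sg 1 (derivable_pt_lim_id sg)).
  rewrite Rmult_1_r in h2. exact: h2.
have bphi : forall sg, Rmin (y k) s <= sg <= Rmax (y k) s ->
   Rabs (D (upd y k sg) - kap) <= eps.
  by move=> sg hsg; apply: hb; apply: inb.
have phi0 : phi (y k) = g y - kap * y k by rewrite /phi upd_id.
case: (Rle_dec (y k) s) => hle.
- have mn : Rmin (y k) s = y k by rewrite /Rmin; case: Rle_dec.
  have mx : Rmax (y k) s = s by rewrite /Rmax; case: Rle_dec.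
  rewrite mn mx in dphi bphi.
  have := mvi phi _ (y k) s eps hle dphi bphi.
  rewrite phi0 /phi (Rabs_right (s - y k)); last lra.
  have -> : g (upd y k s) - kap * s - (g y - kap * y k) = g (upd y k s) - g y - kap * (s - y k) by ring.
  done.
- have mn : Rmin (y k) s = s by rewrite /Rmin; case: Rle_dec.
  have mx : Rmax (y k) s = y k by rewrite /Rmax; case: Rle_dec.
  rewrite mn mx in dphi bphi.
  have := mvi phi _ s (y k) eps ltac:(lra) dphi bphi.
  rewrite phi0 /phi (Rabs_left1 (s - y k)); last lra.
  rewrite -Rabs_Ropp.
  have -> : - (g y - kap * y k - (g (upd y k s) - kap * s)) = g (upd y k s) - g y - kap * (s - y k) by ring.
  have -> : eps * (y k - s) = eps * - (s - y k) by ring.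
  done.
Qed.
Lemma rsum_step N (A : 'I_N -> R) (m : nat) (Hm : (m < N)%nat) :
  rsum (fun k : 'I_N => if (k < m.+1)%nat then A k else 0) =
  rsum (fun k : 'I_N => if (k < m)%nat then A k else 0) + A (Ordinal Hm).
Proof.
rewrite -(@rsum_delta _ (Ordinal Hm) A) -rsum_plus; apply: rsum_ext => k.
rewrite ltnS leq_eqVlt -(inj_eq val_inj) /=.
case: (ltngtP k m) => //= h; ring.
Qed.

Lemma Lin N (g : vec N -> R) (D : 'I_N -> vec N -> R) c d (kap : 'I_N -> R) eps :
  (forall y, cball c d y -> forall k, derivable_pt_lim (fun s => g (upd y k s)) (y k) (D k y)) ->
  (forall k y, cball c d y -> Rabs (D k y - kap k) <= eps) ->
  forall x y rho, cball c d x -> cball c d y -> (forall j, Rabs (x j - y j) <= rho) ->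
  Rabs (g x - g y - rsum (fun k => kap k * (x k - y k))) <= eps * INR N * rho.
Proof.
move=> hd hb x y rho hx hy hr.
pose z (m : nat) : vec N := fun j => if (j < m)%nat then x j else y j.
have zb : forall m, cball c d (z m).
  by move=> m j; rewrite /z; case: ifP => _; [apply: hx | apply: hy].
suff: forall m, (m <= N)%nat -> Rabs (g (z m) - g y -
   rsum (fun k : 'I_N => if (k < m)%nat then kap k * (x k - y k) else 0)) <= eps * INR m * rho.
  move/(_ N (leqnn N)).
  have -> : z N = x by apply: functional_extensionality => j; rewrite /z ltn_ord.
  by rewrite (@rsum_ext N _ (fun k => kap k * (x k - y k))) // => k; rewrite ltn_ord.
elim=> [|m IH] hm.
  have -> : z 0%nat = y by apply: functional_extensionality => j; rewrite /z ltn0.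
  rewrite (@rsum_ext N _ (fun _ => 0)); last by move=> k; rewrite ltn0.
  rewrite rsum0 /=; rewrite Rminus_diag Rminus_0_r Rabs_R0; lra.
have hmN : (m < N)%nat by [].
have IH' := IH (ltnW hmN).
set o := Ordinal hmN.
have ez : z m.+1 = upd (z m) o (x o).
  apply: functional_extensionality => j; rewrite /z /upd ltnS leq_eqVlt -(inj_eq val_inj) /=.
  case: (ltngtP j m) => //= h.
  by have -> : j = o by apply: val_inj.
have zo : z m o = y o by rewrite /z /= ltnn.
have cs := @coord_step N g (D o) o c d (kap o) eps (fun y0 hy0 => hd y0 hy0 o) (fun y0 hy0 => hb o y0 hy0) (z m) (x o) (zb m) (hx o).
rewrite -ez zo in cs.
rewrite (@rsum_step N _ m hmN) -/o S_INR.
have ho := hr o.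
have e0 : 0 <= eps by have := hb o y hy; have := Rabs_pos (D o y - kap o); lra.
have : eps * Rabs (x o - y o) <= eps * rho by apply: Rmult_le_compat_l.
move: cs IH'.
set A := g (z m.+1). set B := g (z m). set S := rsum _. set T := kap o * (x o - y o).
move=> cs IH' hh.
have -> : A - g y - (S + T) = (A - B - T) + (B - g y - S) by ring.
eapply Rle_trans; first exact: Rabs_triang. lra.
Qed.
Lemma sum_split_lin N (A B : 'I_N -> R) (h : R) : h <> 0 ->
  rsum (fun k => A k * (B k / h)) = rsum (fun k => A k * B k) / h.
Proof.
move=> hn; rewrite /Rdiv -(Rmult_comm (/ h)) -rsum_scal; apply: rsum_ext => k; field; done.
Qed.

Lemma fin_bound (I : finType) (F : I -> R) : exists B, 1 <= B /\ forall i, F i <= B.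
Proof.
have [B0 hB] := @fin_max I (fun i B => F i <= B) (fun i B B' h1 h2 => Rle_trans _ _ _ h2 h1)
   (fun i => ex_intro _ (F i) (Rle_refl _)).
exists (Rmax 1 B0); split; first exact: Rmax_l.
move=> i; apply: Rle_trans (hB i) (Rmax_r _ _).
Qed.

Lemma chain N (g : vec N -> R) (D : 'I_N -> vec N -> R) (c : vec N) d
  (gam : R -> vec N) (gam' : 'I_N -> R) s0 :
  0 < d ->
  (forall y, cball c d y -> forall k, derivable_pt_lim (fun s => g (upd y k s)) (y k) (D k y)) ->
  (forall k eps, 0 < eps -> exists e, 0 < e /\ forall y, cball c e y -> Rabs (D k y - D k c) <= eps) ->
  gam s0 = c ->
  (forall k, derivable_pt_lim (fun s => gam s k) s0 (gam' k)) ->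
  derivable_pt_lim (fun s => g (gam s)) s0 (rsum (fun k => D k c * gam' k)).
Proof.
move=> d0 hd hc hg0 hg eps e0.
have [Gb [Gb1 hGb]] := @fin_bound _ (fun k => Rabs (gam' k) + 1).
set Sd := rsum (fun k => Rabs (D k c)).
have Sd0 : 0 <= Sd.
  rewrite /Sd -(rsum0 N); apply: rsum_le => k; exact: Rabs_pos.
have INR0 := pos_INR N.
set eps1 := eps / (2 * (INR N + 1) * Gb).
set eps2 := Rmin 1 (eps / (2 * (Sd + 1))).
have eps1p : 0 < eps1 by apply: Rdiv_lt_0_compat => //; apply: Rmult_lt_0_compat; lra.
have eps2p : 0 < eps2.
  apply: Rmin_glb_lt; first lra. apply: Rdiv_lt_0_compat; lra.
have [eta [etap heta]] := @fin_min _ (fun k eta => forall h, h <> 0 -> Rabs h < eta ->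
     Rabs ((gam (s0 + h) k - gam s0 k) / h - gam' k) < eps2)
   (fun k d1 d2 hd12 H h hn hh => H h hn ltac:(lra))
   (fun k => let: ex_intro dl Hd := hg k eps2 eps2p in ex_intro _ (pos dl) (conj (cond_pos dl) Hd)).
have [e [ep he]] := @fin_min _ (fun k e => forall y, cball c e y -> Rabs (D k y - D k c) <= eps1)
   (fun k d1 d2 hd12 H y hy => H y (fun j => Rle_trans _ _ _ (hy j) (proj2 hd12)))
   (fun k => hc k eps1 eps1p).
set e' := Rmin e d.
have e'p : 0 < e' by apply: Rmin_glb_lt.
have Gbp : 0 < Gb by lra.
have dl : 0 < Rmin eta (e' / Gb) by apply: Rmin_glb_lt => //; apply: Rdiv_lt_0_compat.
exists (mkposreal _ dl) => h hn /= hh.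
have hh1 : Rabs h < eta by have := Rmin_l eta (e' / Gb); lra.
have hh2 : Rabs h < e' / Gb by have := Rmin_r eta (e' / Gb); lra.
have hGh : Gb * Rabs h <= e'.
  have := Rmult_lt_compat_l Gb _ _ Gbp hh2.
  have -> : Gb * (e' / Gb) = e' by field; lra.
  lra.
have hap : 0 < Rabs h by apply: Rabs_pos_lt.
have disp : forall k, Rabs (gam (s0 + h) k - c k) <= Gb * Rabs h.
  move=> k; have H := heta k h hn hh1; rewrite hg0 in H.
  have -> : gam (s0 + h) k - c k = ((gam (s0 + h) k - c k) / h - gam' k) * h + gam' k * h by field.
  eapply Rle_trans; first exact: Rabs_triang.
  rewrite !Rabs_mult.
  have := hGb k; have := Rabs_pos (gam' k).
  have : Rabs ((gam (s0 + h) k - c k) / h - gam' k) * Rabs h <= 1 * Rabs h.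
    apply: Rmult_le_compat_r; first lra. have := Rmin_l 1 (eps / (2 * (Sd + 1))); rewrite -/eps2; lra.
  nra.
have inc : forall y, cball c e' y -> cball c d y.
  by move=> y hy j; apply: Rle_trans (hy j) (Rmin_r _ _).
have ine : forall y, cball c e' y -> cball c e y.
  by move=> y hy j; apply: Rle_trans (hy j) (Rmin_l _ _).
have gb : cball c e' (gam (s0 + h)) by move=> j; apply: Rle_trans (disp j) hGh.
have cb : cball c e' c by move=> j; rewrite Rminus_diag Rabs_R0; lra.
have L := @Lin N g D c e' (fun k => D k c) eps1 (fun y hy => hd y (inc y hy))
   (fun k y hy => he k y (ine y hy)) (gam (s0 + h)) c (Gb * Rabs h) gb cb disp.
rewrite hg0.
set E := g (gam (s0 + h)) - g c - rsum (fun k => D k c * (gam (s0 + h) k - c k)) in L.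
have -> : (g (gam (s0 + h)) - g c) / h - rsum (fun k => D k c * gam' k) =
   E / h + rsum (fun k => D k c * ((gam (s0 + h) k - c k) / h - gam' k)).
  have -> : rsum (fun k => D k c * ((gam (s0 + h) k - c k) / h - gam' k)) =
     rsum (fun k => D k c * ((gam (s0 + h) k - c k) / h)) - rsum (fun k => D k c * gam' k).
    rewrite -rsum_minus; apply: rsum_ext => k; ring.
  rewrite (@sum_split_lin N _ _ _ hn) /E; field; done.
eapply Rle_lt_trans; first exact: Rabs_triang.
have b1 : Rabs (E / h) <= eps1 * INR N * Gb.
  rewrite /Rdiv Rabs_mult Rabs_inv.
  apply (Rmult_le_reg_r (Rabs h)) => //. rewrite Rmult_assoc Rinv_l; last lra.
  lra.
have b2 : Rabs (rsum (fun k => D k c * ((gam (s0 + h) k - c k) / h - gam' k))) <= Sd * eps2.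
  eapply Rle_trans; first exact: rsum_abs.
  rewrite /Sd Rmult_comm -rsum_scal; apply: rsum_le => k.
  rewrite Rabs_mult Rmult_comm; apply: Rmult_le_compat_r; first exact: Rabs_pos.
  rewrite hg0 in heta. have := heta k h hn hh1; lra.
have b1' : eps1 * INR N * Gb < eps / 2.
  rewrite /eps1. have -> : eps / (2 * (INR N + 1) * Gb) * INR N * Gb = eps / 2 * (INR N / (INR N + 1)) by field; lra.
  have : INR N / (INR N + 1) < 1 by apply: (Rmult_lt_reg_r (INR N + 1)); [lra|]; rewrite /Rdiv Rmult_assoc Rinv_l; lra.
  nra.
have b2' : Sd * eps2 < eps / 2.
  have : Sd * eps2 <= Sd * (eps / (2 * (Sd + 1))) by apply: Rmult_le_compat_l => //; rewrite /eps2; exact: Rmin_r.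
  have -> : Sd * (eps / (2 * (Sd + 1))) = eps / 2 * (Sd / (Sd + 1)) by field; lra.
  have : Sd / (Sd + 1) < 1 by apply: (Rmult_lt_reg_r (Sd + 1)); [lra|]; rewrite /Rdiv Rmult_assoc Rinv_l; lra.
  nra.
lra.
Qed.
Definition iq {n} (i : 'I_n) : 'I_(n + n + 1) := lshift 1 (lshift n i).
Definition ip {n} (i : 'I_n) : 'I_(n + n + 1) := lshift 1 (rshift n i).
Definition it {n} : 'I_(n + n + 1) := rshift (n + n) ord0.

Definition pack {n} (q p : vec n) (t : R) : vec (n + n + 1) := fun k =>
  match fintype.split k with
  | inl k1 => match fintype.split k1 with inl i => q i | inr i => p i end
  | inr _ => t
  end.

Lemma split_l m n' (i : 'I_m) : fintype.split (lshift n' i) = inl i.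
Proof. exact: (unsplitK (inl i)). Qed.
Lemma split_r m n' (i : 'I_n') : fintype.split (rshift m i) = inr i.
Proof. exact: (unsplitK (inr i)). Qed.

Lemma pack_q n (q p : vec n) t i : pack q p t (iq i) = q i.
Proof. by rewrite /pack /iq !split_l. Qed.
Lemma pack_p n (q p : vec n) t i : pack q p t (ip i) = p i.
Proof. by rewrite /pack /ip split_l split_r. Qed.
Lemma pack_t n (q p : vec n) t : pack q p t it = t.
Proof. by rewrite /pack /it split_r. Qed.

Lemma Hpack_pack n (H : vec n -> vec n -> R -> R) q p t : Hpack H (pack q p t) = H q p t.
Proof.
rewrite /Hpack; congr H; try apply: functional_extensionality => i.
- exact: pack_q.
- exact: pack_p.
- by have := @pack_t n q p t; rewrite /it.
Qed.

Lemma idx_cases n (k : 'I_(n + n + 1)) :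
  (exists i, k = iq i) \/ (exists i, k = ip i) \/ k = it.
Proof.
rewrite -(splitK k); case: (fintype.split k) => [k1|k2] /=.
- rewrite -(splitK k1); case: (fintype.split k1) => [i|i] /=.
  + by left; exists i.
  + by right; left; exists i.
- by right; right; rewrite /it (ord1 k2).
Qed.

Lemma inl_eq (A B : eqType) (a b : A) : (inl a == inl b :> A + B) = (a == b).
Proof. by []. Qed.
Lemma inr_eq (A B : eqType) (a b : B) : (inr a == inr b :> A + B) = (a == b).
Proof. by []. Qed.
Lemma inlr_eq (A B : eqType) (a : A) (b : B) : (inl a == inr b :> A + B) = false.
Proof. by []. Qed.
Lemma inrl_eq (A B : eqType) (a : A) (b : B) : (inr b == inl a :> A + B) = false.
Proof. by []. Qed.

Lemma eq_split n (a b : 'I_(n + n + 1)) : (a == b) = (fintype.split a == fintype.split b).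
Proof. by rewrite (can_eq splitK). Qed.

Lemma upd_pack_q n (q p : vec n) t i s : upd (pack q p t) (iq i) s = pack (upd q i s) p t.
Proof.
apply: functional_extensionality => k; rewrite /upd /pack /iq.
rewrite -(can_eq splitK) split_l; case: (fintype.split k) => [k1|k2] //.
rewrite ?inl_eq ?inr_eq ?inlr_eq ?inrl_eq -(can_eq splitK) split_l; case: (fintype.split k1) => [j|j]; rewrite ?inl_eq ?inr_eq ?inlr_eq ?inrl_eq //.
Qed.

Lemma upd_pack_p n (q p : vec n) t i s : upd (pack q p t) (ip i) s = pack q (upd p i s) t.
Proof.
apply: functional_extensionality => k; rewrite /upd /pack /ip.
rewrite -(can_eq splitK) split_l; case: (fintype.split k) => [k1|k2] //.
rewrite ?inl_eq ?inr_eq ?inlr_eq ?inrl_eq -(can_eq splitK) split_r; case: (fintype.split k1) => [j|j]; rewrite ?inl_eq ?inr_eq ?inlr_eq ?inrl_eq //.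
Qed.

Lemma upd_pack_t n (q p : vec n) t s : upd (pack q p t) it s = pack q p s.
Proof.
apply: functional_extensionality => k; rewrite /upd /pack /it.
rewrite -(can_eq splitK) split_r; case: (fintype.split k) => [k1|k2]; rewrite ?inl_eq ?inr_eq ?inlr_eq ?inrl_eq //=.
by rewrite (ord1 k2) eqxx.
Qed.

Lemma rsum_pack n (F : 'I_(n + n + 1) -> R) :
  rsum F = rsum (fun i => F (iq i)) + rsum (fun i => F (ip i)) + F it.
Proof.
rewrite rsum_split rsum_split /rsum big_ord1 /=. done.
Qed.
Lemma upd_comm N (y : vec N) j k a b : j != k -> upd (upd y j a) k b = upd (upd y k b) j a.
Proof.
move=> jk; apply: functional_extensionality => l; rewrite /upd.
case: eqP => [->|_]; case: eqP => [e|_] //.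
by move: jk; rewrite e eqxx.
Qed.

Lemma cont_cball N (f : vec N -> R) : cont_on (@everywhere N) f ->
  forall x eps, 0 < eps -> exists e, 0 < e /\ forall y, cball x e y -> Rabs (f y - f x) <= eps.
Proof.
move=> hc x eps e0; have [d [d0 hd]] := hc x I eps e0.
exists (d / 2); split; first lra.
move=> y hy; apply: Rlt_le; apply: hd => // j; have := hy j; lra.
Qed.

Lemma mixed N (g : vec N -> R) (D : 'I_N -> vec N -> R) (DD : 'I_N -> 'I_N -> vec N -> R)
  j k x eps eta :
  j != k ->
  (forall y l, derivable_pt_lim (fun s => g (upd y l s)) (y l) (D l y)) ->
  (forall y l m, derivable_pt_lim (fun s => D l (upd y m s)) (y m) (DD l m y)) ->
  (forall y, cball x (2 * eta) y -> Rabs (DD j k y - DD j k x) <= eps) ->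
  forall s t, Rabs s <= eta -> Rabs t <= eta ->
  Rabs (g (upd (upd x j (x j + s)) k (x k + t)) - g (upd x j (x j + s))
        - g (upd x k (x k + t)) + g x - s * t * DD j k x) <= eps * Rabs t * Rabs s.
Proof.
move=> jk hg hD hc s t hs ht.
have kj : k != j by rewrite eq_sym.
pose G y := g (upd y k (y k + t)) - g y.
pose D' y := D j (upd y k (y k + t)) - D j y.
have eta0 : 0 <= eta by have := Rabs_pos s; lra.
have H1 : forall y, cball x eta y -> derivable_pt_lim (fun sg => G (upd y j sg)) (y j) (D' y).
  move=> y _; rewrite /G /D'.
  have e1 : (fun sg => g (upd (upd y j sg) k (upd y j sg k + t)) - g (upd y j sg)) =
            (fun sg => g (upd (upd y k (y k + t)) j sg) - g (upd y j sg)).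
    apply: functional_extensionality => sg.
    by rewrite (@upd_other _ _ _ _ _ kj) (@upd_comm _ _ _ _ _ _ jk).
  rewrite e1; apply: derivable_pt_lim_minus.
  - have := hg (upd y k (y k + t)) j; by rewrite (@upd_other _ _ _ _ _ jk).
  - exact: hg.
have H2 : forall y, cball x eta y -> Rabs (D' y - t * DD j k x) <= eps * Rabs t.
  move=> y hy.
  have cs := @coord_step N (D j) (DD j k) k x (2 * eta) (DD j k x) eps
    (fun y0 _ => hD y0 j k) hc y (y k + t) ltac:(move=> l; have := hy l; lra)
    ltac:(have := hy k; move: ht; rewrite /Rabs; repeat case: Rcase_abs; lra).
  rewrite (_ : y k + t - y k = t) in cs; last ring.
  rewrite /D'. by rewrite Rmult_comm.
have cx : cball x eta x by move=> l; rewrite Rminus_diag Rabs_R0.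
have := @coord_step N G D' j x eta (t * DD j k x) (eps * Rabs t) H1 H2 x (x j + s) cx
   ltac:(by have -> : x j + s - x j = s by ring).
have -> : x j + s - x j = s by ring.
rewrite /G (@upd_other _ _ _ _ _ kj).
have -> : g (upd (upd x j (x j + s)) k (x k + t)) - g (upd x j (x j + s)) -
  (g (upd x k (x k + t)) - g x) - t * DD j k x * s =
  g (upd (upd x j (x j + s)) k (x k + t)) - g (upd x j (x j + s)) - g (upd x k (x k + t)) + g x -
  s * t * DD j k x by ring.
done.
Qed.

Lemma schwarz N (g : vec N -> R) (D : 'I_N -> vec N -> R) (DD : 'I_N -> 'I_N -> vec N -> R) :
  (forall y l, derivable_pt_lim (fun s => g (upd y l s)) (y l) (D l y)) ->
  (forall y l m, derivable_pt_lim (fun s => D l (upd y m s)) (y m) (DD l m y)) ->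
  (forall l m, cont_on (@everywhere N) (DD l m)) ->
  forall j k x, DD j k x = DD k j x.
Proof.
move=> hg hD hc j k x.
case: (eqVneq j k) => [->//|jk].
have kj : k != j by rewrite eq_sym.
apply: Rminus_diag_uniq.
suff: forall eps, 0 < eps -> Rabs (DD j k x - DD k j x) <= 2 * eps.
  move=> H; case: (Req_dec (DD j k x - DD k j x) 0) => // ne.
  have ap := Rabs_pos_lt _ ne.
  have := H (Rabs (DD j k x - DD k j x) / 4) ltac:(lra); lra.
move=> eps e0.
have [e1 [e10 he1]] := @cont_cball N _ (hc j k) x eps e0.
have [e2 [e20 he2]] := @cont_cball N _ (hc k j) x eps e0.
set eta := Rmin e1 e2 / 2.
have eta0 : 0 < eta by have := Rmin_glb_lt _ _ _ e10 e20; rewrite /eta; lra.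
have hc1 : forall y, cball x (2 * eta) y -> Rabs (DD j k y - DD j k x) <= eps.
  move=> y hy; apply: he1 => l; have := hy l; have := Rmin_l e1 e2; rewrite /eta; lra.
have hc2 : forall y, cball x (2 * eta) y -> Rabs (DD k j y - DD k j x) <= eps.
  move=> y hy; apply: he2 => l; have := hy l; have := Rmin_r e1 e2; rewrite /eta; lra.
have ae : Rabs eta = eta by rewrite Rabs_right; lra.
have A := @mixed N g D DD j k x eps eta jk hg hD hc1 eta eta ltac:(lra) ltac:(lra).
have B := @mixed N g D DD k j x eps eta kj hg hD hc2 eta eta ltac:(lra) ltac:(lra).
rewrite (@upd_comm _ _ _ _ _ _ kj) in B.
rewrite ae in A B.
set a := g (upd (upd x j (x j + eta)) k (x k + eta)) in A B.
set b := g (upd x j (x j + eta)) in A B.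
set c := g (upd x k (x k + eta)) in A B.
have : Rabs (eta * eta * (DD j k x - DD k j x)) <= 2 * eps * (eta * eta).
  have -> : eta * eta * (DD j k x - DD k j x) = - (a - b - c + g x - eta * eta * DD j k x) + (a - c - b + g x - eta * eta * DD k j x) by ring.
  eapply Rle_trans; first exact: Rabs_triang. rewrite Rabs_Ropp; lra.
rewrite Rabs_mult (Rabs_right (eta * eta)); last nra.
move=> h; apply: (Rmult_le_reg_l (eta * eta)); first nra. lra.
Qed.
Lemma fchoice (A B : Type) (P : A -> B -> Prop) :
  (forall a, exists b, P a b) -> exists f, forall a, P a (f a).
Proof.
move=> h; exists (fun a => proj1_sig (constructive_indefinite_description _ (h a))).
move=> a; exact: (proj2_sig (constructive_indefinite_description _ (h a))).
Qed.

Lemma C3_struct N (g : vec N -> R) : Ck_on (@everywhere N) 3 g ->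
  exists (D1 : 'I_N -> vec N -> R) (D2 : 'I_N -> 'I_N -> vec N -> R)
         (D3 : 'I_N -> 'I_N -> 'I_N -> vec N -> R),
  (forall y l, derivable_pt_lim (fun s => g (upd y l s)) (y l) (D1 l y)) /\
  (forall y l m, derivable_pt_lim (fun s => D1 l (upd y m s)) (y m) (D2 l m y)) /\
  (forall y l m o, derivable_pt_lim (fun s => D2 l m (upd y o s)) (y o) (D3 l m o y)) /\
  (forall l, cont_on (@everywhere N) (D1 l)) /\
  (forall l m, cont_on (@everywhere N) (D2 l m)) /\
  (forall l m o, cont_on (@everywhere N) (D3 l m o)).
Proof.
move=> [_ h].
have [D1 hD1] := @fchoice _ _ _ h.
have [D2 hD2] := @fchoice ('I_N * 'I_N)%type _ _ (fun jk => (proj2 (proj2 (hD1 jk.1))) jk.2).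
have [D3 hD3] := @fchoice ('I_N * 'I_N * 'I_N)%type _ _
   (fun jkl => (proj2 (proj2 (hD2 jkl.1))) jkl.2).
exists D1, (fun l m => D2 (l, m)), (fun l m o => D3 (l, m, o)).
split; first by move=> y l; exact: (proj1 (hD1 l) y I).
split; first by move=> y l m; exact: (proj1 (hD2 (l, m)) y I).
split; first by move=> y l m o; exact: (proj1 (hD3 (l, m, o)) y I).
split; first by move=> l; exact: (proj1 (proj2 (hD1 l))).
split; first by move=> l m; exact: (proj1 (proj2 (hD2 (l, m)))).
by move=> l m o; exact: (proj2 (hD3 (l, m, o))).
Qed.

Lemma Hp_id n (H : vec n -> vec n -> R -> R) (Hp : vec n -> vec n -> R -> vec n)
  (D1 : 'I_(n + n + 1) -> vec (n + n + 1) -> R) :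
  (forall q p t i, derivable_pt_lim (fun s => H q (upd p i s) t) (p i) (Hp q p t i)) ->
  (forall y l, derivable_pt_lim (fun s => Hpack H (upd y l s)) (y l) (D1 l y)) ->
  forall q p t i, Hp q p t i = D1 (ip i) (pack q p t).
Proof.
move=> hH hD q p t i.
have := hD (pack q p t) (ip i).
rewrite pack_p.
have -> : (fun s => Hpack H (upd (pack q p t) (ip i) s)) = (fun s => H q (upd p i s) t).
  by apply: functional_extensionality => s; rewrite upd_pack_p Hpack_pack.
move=> h; exact: (uniqueness_limite _ _ _ _ (hH q p t i) h).
Qed.

Lemma Hq_id n (H : vec n -> vec n -> R -> R) (Hq : vec n -> vec n -> R -> vec n)
  (D1 : 'I_(n + n + 1) -> vec (n + n + 1) -> R) :
  (forall q p t i, derivable_pt_lim (fun s => H (upd q i s) p t) (q i) (Hq q p t i)) ->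
  (forall y l, derivable_pt_lim (fun s => Hpack H (upd y l s)) (y l) (D1 l y)) ->
  forall q p t i, Hq q p t i = D1 (iq i) (pack q p t).
Proof.
move=> hH hD q p t i.
have := hD (pack q p t) (iq i).
rewrite pack_q.
have -> : (fun s => Hpack H (upd (pack q p t) (iq i) s)) = (fun s => H (upd q i s) p t).
  by apply: functional_extensionality => s; rewrite upd_pack_q Hpack_pack.
move=> h; exact: (uniqueness_limite _ _ _ _ (hH q p t i) h).
Qed.
Definition Lq {n} (S : 'I_(n + n + 1) -> 'I_(n + n + 1) -> R) l (a b : vec n) : R :=
  rsum (fun j => S l (iq j) * a j) + rsum (fun j => S l (ip j) * b j).

Definition Phi {n} (S : 'I_(n + n + 1) -> 'I_(n + n + 1) -> R) (a b a' b' : vec n) : R :=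
  rsum (fun i => b i * Lq S (ip i) a' b' - Lq S (iq i) a b * a' i).

Definition BB {n} (x y : vec n) : R := rsum (fun i => x i * y i).

Lemma rsum_scal_r N c (F : 'I_N -> R) : rsum (fun i => F i * c) = rsum F * c.
Proof. rewrite Rmult_comm -rsum_scal; apply: rsum_ext => i; ring. Qed.

Lemma rsum_sym N (F : 'I_N -> 'I_N -> R) : (forall i j, F i j = F j i) ->
  rsum (fun i => rsum (fun j => F i j)) = rsum (fun i => rsum (fun j => F j i)).
Proof. move=> h; apply: rsum_ext => i; apply: rsum_ext => j; exact: h. Qed.

Lemma Phi_expand n S (a b a' b' : vec n) :
  Phi S a b a' b' =
    rsum (fun i => rsum (fun j => b i * S (ip i) (iq j) * a' j))
  + rsum (fun i => rsum (fun j => b i * S (ip i) (ip j) * b' j))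
  - rsum (fun i => rsum (fun j => S (iq i) (iq j) * a j * a' i))
  - rsum (fun i => rsum (fun j => S (iq i) (ip j) * b j * a' i)).
Proof.
rewrite -rsum_plus -!rsum_minus /Phi; apply: rsum_ext => i; rewrite /Lq.
rewrite Rmult_plus_distr_l Rmult_plus_distr_r -!rsum_scal -!rsum_scal_r.
have -> : forall x y z w : R, x + y - (z + w) = x + y - z - w by move=> *; ring.
congr (_ + _ - _ - _); apply: rsum_ext => j; ring.
Qed.

Lemma Phi_sym n (S : 'I_(n + n + 1) -> 'I_(n + n + 1) -> R) :
  (forall l m, S l m = S m l) ->
  forall a b a' b' : vec n, Phi S a b a' b' = Phi S a' b' a b.
Proof.
move=> hs a b a' b'; rewrite !Phi_expand.
have e1 : forall (x y x' : vec n),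
   rsum (fun i => rsum (fun j => S (iq i) (ip j) * y j * x' i)) =
   rsum (fun i => rsum (fun j => y i * S (ip i) (iq j) * x' j)).
  move=> x y x'; rewrite rsum_exchange; apply: rsum_ext => i; apply: rsum_ext => j.
  rewrite hs; ring.
rewrite (e1 a b a') (e1 a' b' a).
have -> : rsum (fun i => rsum (fun j => b i * S (ip i) (ip j) * b' j)) =
          rsum (fun i => rsum (fun j => b' i * S (ip i) (ip j) * b j)).
  rewrite rsum_exchange; apply: rsum_ext => i; apply: rsum_ext => j; rewrite hs; ring.
have -> : rsum (fun i => rsum (fun j => S (iq i) (iq j) * a j * a' i)) =
          rsum (fun i => rsum (fun j => S (iq i) (iq j) * a' j * a i)).
  rewrite rsum_exchange; apply: rsum_ext => i; apply: rsum_ext => j; rewrite hs; ring.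
ring.
Qed.

(* one step of each kind preserves the symplectic form *)
Lemma stepA_sympl n (S : 'I_(n + n + 1) -> 'I_(n + n + 1) -> R) c
  (dq dp dP dQ dq' dp' dP' dQ' : vec n) :
  (forall l m, S l m = S m l) ->
  (forall i, dP i = dp i - c * Lq S (iq i) dq dP) ->
  (forall i, dQ i = dq i + c * Lq S (ip i) dq dP) ->
  (forall i, dP' i = dp' i - c * Lq S (iq i) dq' dP') ->
  (forall i, dQ' i = dq' i + c * Lq S (ip i) dq' dP') ->
  BB dP dQ' - BB dP' dQ = BB dp dq' - BB dp' dq.
Proof.
move=> hs h1 h2 h3 h4.
have E : forall (dq dp dP dq' dP' dQ' : vec n),
   (forall i, dP i = dp i - c * Lq S (iq i) dq dP) ->
   (forall i, dQ' i = dq' i + c * Lq S (ip i) dq' dP') ->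
   BB dP dQ' = BB dp dq' + c * Phi S dq dP dq' dP'.
  move=> x1 x2 x3 x4 x5 x6 e1 e2.
  rewrite /BB /Phi -rsum_scal -rsum_plus; apply: rsum_ext => i; rewrite e2 e1; ring.
rewrite (E dq dp dP dq' dP' dQ' h1 h4) (E dq' dp' dP' dq dP dQ h3 h2) (@Phi_sym n S hs dq dP); ring.
Qed.

Lemma stepB_sympl n (S : 'I_(n + n + 1) -> 'I_(n + n + 1) -> R) c
  (da db dq dp da' db' dq' dp' : vec n) :
  (forall l m, S l m = S m l) ->
  (forall i, dq i = da i + c * Lq S (ip i) dq db) ->
  (forall i, dp i = db i - c * Lq S (iq i) dq db) ->
  (forall i, dq' i = da' i + c * Lq S (ip i) dq' db') ->
  (forall i, dp' i = db' i - c * Lq S (iq i) dq' db') ->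
  BB dp dq' - BB dp' dq = BB db da' - BB db' da.
Proof.
move=> hs h1 h2 h3 h4.
have E : forall (da db dq dp dq' db' : vec n),
   (forall i, dp i = db i - c * Lq S (iq i) dq db) ->
   (forall i, dq' i = da i + c * Lq S (ip i) dq' db') ->
   BB dp dq' = BB db da + c * Phi S dq db dq' db'.
  move=> x1 x2 x3 x4 x5 x6 e1 e2.
  rewrite /BB /Phi -rsum_scal -rsum_plus; apply: rsum_ext => i; rewrite e2 e1; ring.
rewrite (E da' db dq dp dq' db' h2 h3) (E da db' dq' dp' dq db h4 h1) (@Phi_sym n S hs dq db); ring.
Qed.
Lemma dpl_lin a b x : derivable_pt_lim (fun s => a + s * b) x b.
Proof.
have h := derivable_pt_lim_plus _ _ x _ _ (derivable_pt_lim_const a x)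
   (derivable_pt_lim_scal id b x 1 (derivable_pt_lim_id x)).
rewrite Rplus_0_l Rmult_1_r in h.
apply: (derivable_pt_lim_ext _ _ _ _ _ h) => s.
rewrite /plus_fct /fct_cte /mult_real_fct /id; ring.
Qed.

Lemma dpl_local (f g : R -> R) x l eta : 0 < eta ->
  (forall s, Rabs (s - x) < eta -> f s = g s) ->
  derivable_pt_lim f x l -> derivable_pt_lim g x l.
Proof.
move=> e0 he hf eps ep; have [dl hdl] := hf eps ep.
have p : 0 < Rmin dl eta by apply: Rmin_glb_lt => //; exact: cond_pos.
exists (mkposreal _ p) => hh hn /= ha.
rewrite -!he; first (apply: hdl => //; have := Rmin_l dl eta; lra).
- rewrite Rminus_diag Rabs_R0 //.
- have -> : x + hh - x = hh by ring. have := Rmin_r dl eta; lra.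
Qed.

Lemma dpl_unique_local (f g : R -> R) x l1 l2 eta : 0 < eta ->
  (forall s, Rabs (s - x) < eta -> f s = g s) ->
  derivable_pt_lim f x l1 -> derivable_pt_lim g x l2 -> l1 = l2.
Proof.
move=> e0 he h1 h2; apply: (uniqueness_limite g x) => //.
exact: (@dpl_local f g x l1 eta e0 he h1).
Qed.

Lemma chain_ev N (g : vec N -> R) (D : 'I_N -> vec N -> R) :
  (forall y l, derivable_pt_lim (fun s => g (upd y l s)) (y l) (D l y)) ->
  (forall l, cont_on (@everywhere N) (D l)) ->
  forall (gam : R -> vec N) (gam' : 'I_N -> R) s0,
  (forall k, derivable_pt_lim (fun s => gam s k) s0 (gam' k)) ->
  derivable_pt_lim (fun s => g (gam s)) s0 (rsum (fun k => D k (gam s0) * gam' k)).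
Proof.
move=> hg hc gam gam' s0 hgam.
refine (@chain N g D (gam s0) 1 gam gam' s0 _ _ _ _ hgam).
- lra.
- move=> y hy k; exact: hg.
- move=> k eps e0; exact: (@cont_cball N _ (hc k) (gam s0) eps e0).
- done.
Qed.

Lemma pack_deriv n (A B : R -> vec n) (C : R -> R) (dA dB : vec n) dC s0 :
  (forall i, derivable_pt_lim (fun s => A s i) s0 (dA i)) ->
  (forall i, derivable_pt_lim (fun s => B s i) s0 (dB i)) ->
  derivable_pt_lim C s0 dC ->
  forall k, derivable_pt_lim (fun s => pack (A s) (B s) (C s) k) s0 (pack dA dB dC k).
Proof.
move=> hA hB hC k; case: (@idx_cases n k) => [[i ->]|[[i ->]| ->]].
- rewrite pack_q; refine (derivable_pt_lim_ext (fun s => A s i) _ s0 _ _ (hA i)).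
 
  by move=> s; rewrite pack_q.
- rewrite pack_p; refine (derivable_pt_lim_ext (fun s => B s i) _ s0 _ _ (hB i)).
 
  by move=> s; rewrite pack_p.
- rewrite pack_t; refine (derivable_pt_lim_ext C _ s0 _ _ (hC)).
 
  by move=> s; rewrite pack_t.
Qed.

Lemma comp_deriv n (D1 : 'I_(n + n + 1) -> vec (n + n + 1) -> R)
  (D2 : 'I_(n + n + 1) -> 'I_(n + n + 1) -> vec (n + n + 1) -> R) :
  (forall y l m, derivable_pt_lim (fun s => D1 l (upd y m s)) (y m) (D2 l m y)) ->
  (forall l m, cont_on (@everywhere _) (D2 l m)) ->
  forall l (A B : R -> vec n) (dA dB : vec n) t s0,
  (forall i, derivable_pt_lim (fun s => A s i) s0 (dA i)) ->
  (forall i, derivable_pt_lim (fun s => B s i) s0 (dB i)) ->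
  derivable_pt_lim (fun s => D1 l (pack (A s) (B s) t)) s0
     (Lq (fun l m => D2 l m (pack (A s0) (B s0) t)) l dA dB).
Proof.
move=> hD hc l A B dA dB t s0 hA hB.
have h := @chain_ev _ (D1 l) (D2 l) (fun y m => hD y l m) (hc l)
   (fun s => pack (A s) (B s) t) (pack dA dB 0) s0
   (@pack_deriv n A B (fun _ => t) dA dB 0 s0 hA hB (derivable_pt_lim_const t s0)).
move: h; rewrite rsum_pack pack_t /Lq.
rewrite (@rsum_ext n (fun i => D2 l (iq i) _ * pack dA dB 0 (iq i)) (fun i => D2 l (iq i) (pack (A s0) (B s0) t) * dA i)); last by move=> i; rewrite pack_q.
rewrite (@rsum_ext n (fun i => D2 l (ip i) _ * pack dA dB 0 (ip i)) (fun i => D2 l (ip i) (pack (A s0) (B s0) t) * dB i)); last by move=> i; rewrite pack_p.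
by rewrite Rmult_0_r Rplus_0_r.
Qed.

Lemma near_U N (U : vec N -> Prop) z (w : vec N) : is_open U -> U z ->
  exists eta, 0 < eta /\ forall s, Rabs (s - 0) < eta -> U (fun k => z k + s * w k).
Proof.
move=> hU hz; have [d [d0 hd]] := hU z hz.
have [Wb [Wb1 hW]] := @fin_bound _ (fun k : 'I_N => Rabs (w k)).
exists (d / Wb); split; first by apply: Rdiv_lt_0_compat; lra.
move=> s hs; apply: hd => k.
rewrite Rminus_0_r in hs.
have -> : z k + s * w k - z k = s * w k by ring.
rewrite Rabs_mult.
have : Rabs s * Wb < d.
  have := Rmult_lt_compat_r Wb _ _ ltac:(lra) hs.
  have -> : d / Wb * Wb = d by field; lra.
  done.
have := hW k; have := Rabs_pos s; have := Rabs_pos (w k); nra.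
Qed.

Lemma dir_C1 N (U : vec N -> Prop) (g : vec N -> R) z : is_open U -> Ck_on U 1 g -> U z ->
  forall w, exists l, dirder g z w l.
Proof.
move=> hU [_ hg] hz w.
have [D hD] := @fchoice _ _ _ hg.
have [d [d0 hd]] := hU z hz.
exists (rsum (fun k => D k z * w k)).
have e0 : (fun k => z k + 0 * w k) = z by apply: functional_extensionality => k; ring.
rewrite /dirder.
have := @chain N g D z (d / 2) (fun s k => z k + s * w k) w 0 ltac:(lra).
rewrite e0; apply.
- move=> y hy k; apply: (proj1 (hD k)); apply: hd => j; have := hy j; lra.
- move=> k eps ep.
  have [d' [d'0 hd']] := proj2 (hD k) z hz eps ep.
  exists (Rmin d' d / 2); split; first by have := Rmin_glb_lt _ _ _ d'0 d0; lra.
  move=> y hy; apply: Rlt_le; apply: hd'.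
  + apply: hd => j; have := hy j; have := Rmin_r d' d; lra.
  + move=> j; have := hy j; have := Rmin_l d' d; lra.
- done.
- move=> k; exact: dpl_lin.
Qed.
Lemma dplP (f g : R -> R) x a b : derivable_pt_lim f x a -> derivable_pt_lim g x b ->
  derivable_pt_lim (fun s => f s + g s) x (a + b).
Proof. move=> h1 h2; exact: (derivable_pt_lim_plus _ _ _ _ _ h1 h2). Qed.
Lemma dplM (f g : R -> R) x a b : derivable_pt_lim f x a -> derivable_pt_lim g x b ->
  derivable_pt_lim (fun s => f s - g s) x (a - b).
Proof. move=> h1 h2; exact: (derivable_pt_lim_minus _ _ _ _ _ h1 h2). Qed.
Lemma dplS (f : R -> R) c x a : derivable_pt_lim f x a ->
  derivable_pt_lim (fun s => c * f s) x (c * a).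
Proof. move=> h1; exact: (derivable_pt_lim_scal _ _ _ _ h1). Qed.

Lemma part1 n (Hq Hp : vec n -> vec n -> R -> vec n)
  (D1 : 'I_(n + n + 1) -> vec (n + n + 1) -> R)
  (D2 : 'I_(n + n + 1) -> 'I_(n + n + 1) -> vec (n + n + 1) -> R) :
  (forall y l m, derivable_pt_lim (fun s => D1 l (upd y m s)) (y m) (D2 l m y)) ->
  (forall l m, cont_on (@everywhere _) (D2 l m)) ->
  (forall l m y, D2 l m y = D2 m l y) ->
  (forall q p t i, Hp q p t i = D1 (ip i) (pack q p t)) ->
  (forall q p t i, Hq q p t i = D1 (iq i) (pack q p t)) ->
  (forall (h t0 a : R) (U : vec (n + n) -> Prop) (qf Pf : vec (n + n) -> vec n),
     0 < h -> is_open U ->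
     (forall i, Ck_on U 1 (fun z => qf z i)) ->
     (forall i, Ck_on U 1 (fun z => Pf z i)) ->
     (forall z, U z ->
        step_eqs Hq Hp h t0 a (fst_half z) (snd_half z) (qf z) (Pf z)) ->
     forall z, U z -> forall u v : vec (n + n),
       exists dQu dQv dPu dPv : vec n,
         (forall i, dirder (fun w => step_Q Hp h t0 a (qf w) (Pf w) i) z u (dQu i)) /\
         (forall i, dirder (fun w => step_Q Hp h t0 a (qf w) (Pf w) i) z v (dQv i)) /\
         (forall i, dirder (fun w => Pf w i) z u (dPu i)) /\
         (forall i, dirder (fun w => Pf w i) z v (dPv i)) /\
         rsum (fun i => dPu i * dQv i - dPv i * dQu i) =
         rsum (fun i => snd_half u i * fst_half v i - snd_half v i * fst_half u i)).
Proof.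
move=> hD hc hsym eHp eHq h t0 a U qf Pf h0 hU hq hP hst z hz u v.
pose S1 := fun l m => D2 l m (pack (qf z) (snd_half z) (t0 + a * h)).
pose S2 := fun l m => D2 l m (pack (qf z) (Pf z) (t0 + (1 - a) * h)).
have dirdata : forall w : vec (n + n), exists dq dP : vec n,
  (forall i, dirder (fun y => Pf y i) z w (dP i)) /\
  (forall i, dq i = fst_half w i + h / 2 * Lq S1 (ip i) dq (snd_half w)) /\
  (forall i, dP i = (snd_half w i - h / 2 * Lq S1 (iq i) dq (snd_half w))
                    - h / 2 * Lq S2 (iq i) dq dP) /\
  (forall i, dirder (fun y => step_Q Hp h t0 a (qf y) (Pf y) i) z w
                    (dq i + h / 2 * Lq S2 (ip i) dq dP)).
  move=> w.
  have [dq hdq] := @fchoice _ _ _ (fun i => @dir_C1 _ U (fun y => qf y i) z hU (hq i) hz w).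
  have [dP hdP] := @fchoice _ _ _ (fun i => @dir_C1 _ U (fun y => Pf y i) z hU (hP i) hz w).
  exists dq, dP.
  pose Z s : vec (n + n) := fun k => z k + s * w k.
  have eZ0 : Z 0 = z by apply: functional_extensionality => k; rewrite /Z; ring.
  have hqd : forall i, derivable_pt_lim (fun s => qf (Z s) i) 0 (dq i) by exact: hdq.
  have hPd : forall i, derivable_pt_lim (fun s => Pf (Z s) i) 0 (dP i) by exact: hdP.
  have hbd : forall i, derivable_pt_lim (fun s => snd_half (Z s) i) 0 (snd_half w i).
    by move=> i; rewrite /snd_half /Z; exact: dpl_lin.
  have had : forall i, derivable_pt_lim (fun s => fst_half (Z s) i) 0 (fst_half w i).
    by move=> i; rewrite /fst_half /Z; exact: dpl_lin.
  have [eta [eta0 heta]] := @near_U _ U z w hU hz.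
  have c1 := fun l => @comp_deriv n D1 D2 hD hc l (fun s => qf (Z s)) (fun s => snd_half (Z s))
      dq (snd_half w) (t0 + a * h) 0 hqd hbd.
  have c2 := fun l => @comp_deriv n D1 D2 hD hc l (fun s => qf (Z s)) (fun s => Pf (Z s))
      dq dP (t0 + (1 - a) * h) 0 hqd hPd.
  rewrite eZ0 in c1 c2. rewrite -/S1 in c1. rewrite -/S2 in c2.
  split; first exact: hdP.
  split.
    move=> i; apply: (@dpl_unique_local (fun s => qf (Z s) i)
       (fun s => fst_half (Z s) i + h / 2 * D1 (ip i) (pack (qf (Z s)) (snd_half (Z s)) (t0 + a * h)))
       0 _ _ eta eta0) => //.
    - move=> s hs; have [e1 _] := hst _ (heta s hs); by rewrite e1 eHp.
    - apply: dplP => //; apply: dplS; exact: c1.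
  split.
    move=> i; apply: (@dpl_unique_local (fun s => Pf (Z s) i)
       (fun s => (snd_half (Z s) i - h / 2 * D1 (iq i) (pack (qf (Z s)) (snd_half (Z s)) (t0 + a * h)))
          - h / 2 * D1 (iq i) (pack (qf (Z s)) (Pf (Z s)) (t0 + (1 - a) * h)))
       0 _ _ eta eta0) => //.
    - move=> s hs; have [_ e2] := hst _ (heta s hs); by rewrite e2 /step_p !eHq.
    - apply: dplM; last by apply: dplS; exact: c2.
      apply: dplM => //; apply: dplS; exact: c1.
  move=> i; rewrite /dirder -/Z.
  apply: (derivable_pt_lim_ext (fun s => qf (Z s) i + h / 2 * D1 (ip i) (pack (qf (Z s)) (Pf (Z s)) (t0 + (1 - a) * h)))).
    by move=> s; rewrite /step_Q eHp.
  apply: dplP => //; apply: dplS; exact: c2.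
have [dqu [dPu [hPu [Au [Bu Cu]]]]] := dirdata u.
have [dqv [dPv [hPv [Av [Bv Cv]]]]] := dirdata v.
exists (fun i => dqu i + h / 2 * Lq S2 (ip i) dqu dPu), (fun i => dqv i + h / 2 * Lq S2 (ip i) dqv dPv), dPu, dPv.
do 4 (split => //).
have s1 : forall l m, S1 l m = S1 m l by move=> l m; exact: hsym.
have s2 : forall l m, S2 l m = S2 m l by move=> l m; exact: hsym.
have A := @stepA_sympl n S2 (h / 2) dqu (fun i => snd_half u i - h / 2 * Lq S1 (iq i) dqu (snd_half u)) dPu
   (fun i => dqu i + h / 2 * Lq S2 (ip i) dqu dPu)
   dqv (fun i => snd_half v i - h / 2 * Lq S1 (iq i) dqv (snd_half v)) dPv
   (fun i => dqv i + h / 2 * Lq S2 (ip i) dqv dPv) s2 Bu (fun _ => erefl) Bv (fun _ => erefl).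
have B := @stepB_sympl n S1 (h / 2) (fst_half u) (snd_half u) dqu
   (fun i => snd_half u i - h / 2 * Lq S1 (iq i) dqu (snd_half u))
   (fst_half v) (snd_half v) dqv
   (fun i => snd_half v i - h / 2 * Lq S1 (iq i) dqv (snd_half v)) s1 Au (fun _ => erefl) Av (fun _ => erefl).
rewrite !rsum_minus; rewrite /BB in A B; rewrite A B.
done.
Qed.
Lemma lip N (g : vec N -> R) (D : 'I_N -> vec N -> R) c d B :
  (forall y l, derivable_pt_lim (fun s => g (upd y l s)) (y l) (D l y)) ->
  (forall l y, cball c d y -> Rabs (D l y) <= B) ->
  forall x y rho, cball c d x -> cball c d y -> (forall j, Rabs (x j - y j) <= rho) ->
  Rabs (g x - g y) <= B * INR N * rho.
Proof.
move=> hg hb x y rho hx hy hr.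
have := @Lin N g D c d (fun _ => 0) B (fun y0 _ k => hg y0 k)
  (fun k y0 hy0 => ltac:(rewrite Rminus_0_r; exact: hb)) x y rho hx hy hr.
rewrite (@rsum_ext N _ (fun _ => 0)); last by move=> k; ring.
by rewrite rsum0 Rminus_0_r.
Qed.

Lemma taylor2 N (g : vec N -> R) (D : 'I_N -> vec N -> R) (DD : 'I_N -> 'I_N -> vec N -> R) c d B :
  (forall y l, derivable_pt_lim (fun s => g (upd y l s)) (y l) (D l y)) ->
  (forall y l m, derivable_pt_lim (fun s => D l (upd y m s)) (y m) (DD l m y)) ->
  (forall l m y, cball c d y -> Rabs (DD l m y) <= B) ->
  forall x rho, 0 <= rho <= d -> (forall j, Rabs (x j - c j) <= rho) ->
  Rabs (g x - g c - rsum (fun k => D k c * (x k - c k))) <= (B * INR N * rho) * INR N * rho.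
Proof.
move=> hg hD hb x rho [r0 rd] hx.
have sub : forall y, cball c rho y -> cball c d y by move=> y hy j; have := hy j; lra.
have cc : cball c rho c by move=> j; rewrite Rminus_diag Rabs_R0.
apply: (@Lin N g D c rho (fun k => D k c) (B * INR N * rho) (fun y0 _ k => hg y0 k)) => //.
move=> k y hy.
exact: (@lip N (D k) (DD k) c d B (fun y0 l => hD y0 k l) (fun l y0 hy0 => hb k l y0 hy0) y c rho
   (sub y hy) (sub c cc) hy).
Qed.

Lemma dpl_shift (f : R -> R) t0 s l : derivable_pt_lim f (t0 + s) l ->
  derivable_pt_lim (fun s0 => f (t0 + s0)) s l.
Proof.
move=> h eps e0; have [dl hd] := h eps e0; exists dl => hh hn ha.
rewrite -Rplus_assoc; exact: hd.
Qed.

Lemma dpl_bound (f : R -> R) x l : derivable_pt_lim f x l ->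
  exists eta, 0 < eta /\ forall hh, Rabs hh < eta -> Rabs (f (x + hh) - f x) <= (Rabs l + 1) * Rabs hh.
Proof.
move=> h; have [dl hd] := h 1 ltac:(lra).
exists dl; split; first exact: cond_pos.
move=> hh ha; case: (Req_dec hh 0) => [->|hn].
  rewrite Rplus_0_r Rminus_diag Rabs_R0; lra.
have H := hd hh hn ha.
have -> : f (x + hh) - f x = ((f (x + hh) - f x) / hh - l) * hh + l * hh by field.
eapply Rle_trans; first exact: Rabs_triang.
rewrite !Rabs_mult.
have := Rabs_pos hh; nra.
Qed.

Lemma ode1 (F G : R -> R) F0 G0 s Lc : 0 <= s -> 0 <= Lc ->
  (forall sg, 0 <= sg <= s -> derivable_pt_lim F sg (G sg)) -> F 0 = F0 ->
  (forall sg, 0 <= sg <= s -> Rabs (G sg - G0) <= Lc * sg) ->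
  Rabs (F s - F0 - s * G0) <= Lc * (s * s).
Proof.
move=> s0 L0 hd hF hG.
have := @mvi (fun sg => F sg - sg * G0) (fun sg => G sg - G0) 0 s (Lc * s) s0.
rewrite hF Rmult_0_l Rminus_0_r Rminus_0_r.
have -> : Lc * s * s = Lc * (s * s) by ring.
have -> : F s - s * G0 - F0 = F s - F0 - s * G0 by ring.
apply.
- move=> sg hsg; have := derivable_pt_lim_minus _ _ _ _ _ (hd sg hsg) (dpl_lin 0 G0 sg).
  apply: derivable_pt_lim_ext => x; rewrite /minus_fct; ring.
- move=> sg hsg; have := hG sg hsg; have : Lc * sg <= Lc * s by apply: Rmult_le_compat_l; lra.
  lra.
Qed.

Lemma dpl_sq c x : derivable_pt_lim (fun s => s * s * c) x (2 * x * c).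
Proof.
have h := derivable_pt_lim_scal _ c x _ (derivable_pt_lim_mult id id x 1 1 (derivable_pt_lim_id x) (derivable_pt_lim_id x)).
have e : forall z, mult_real_fct c (id * id)%F z = z * z * c.
  move=> z; rewrite /mult_real_fct /mult_fct /id; ring.
have h' := derivable_pt_lim_ext _ (fun s => s * s * c) x _ e h.
have -> : 2 * x * c = c * (1 * id x + id x * 1) by rewrite /id; ring.
exact: h'.
Qed.

Lemma ode2 (F G : R -> R) F0 G0 G1 s Lc : 0 <= s -> 0 <= Lc ->
  (forall sg, 0 <= sg <= s -> derivable_pt_lim F sg (G sg)) -> F 0 = F0 ->
  (forall sg, 0 <= sg <= s -> Rabs (G sg - G0 - sg * G1) <= Lc * (sg * sg)) ->
  Rabs (F s - F0 - s * G0 - s * s / 2 * G1) <= Lc * (s * s * s).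
Proof.
move=> s0 L0 hd hF hG.
have := @mvi (fun sg => F sg - sg * G0 - sg * sg * (G1 / 2)) (fun sg => G sg - G0 - sg * G1) 0 s (Lc * (s * s)) s0.
rewrite hF !Rmult_0_l !Rminus_0_r.
have -> : Lc * (s * s) * s = Lc * (s * s * s) by ring.
have -> : F s - s * G0 - s * s * (G1 / 2) - F0 = F s - F0 - s * G0 - s * s / 2 * G1 by field.
apply.
- move=> sg hsg.
  have := derivable_pt_lim_minus _ _ _ _ _
    (derivable_pt_lim_minus _ _ _ _ _ (hd sg hsg) (dpl_lin 0 G0 sg)) (dpl_sq (G1 / 2) sg).
  have -> : G sg - G0 - 2 * sg * (G1 / 2) = G sg - G0 - sg * G1 by field.
  apply: derivable_pt_lim_ext => x; rewrite /minus_fct; ring.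
- move=> sg hsg; have := hG sg hsg.
  have : Lc * (sg * sg) <= Lc * (s * s) by apply: Rmult_le_compat_l => //; nra.
  lra.
Qed.
Lemma Rdiv_le_0_compat a b : 0 <= a -> 0 < b -> 0 <= a / b.
Proof. move=> ha hb; apply: Rmult_le_pos => //; apply: Rlt_le; exact: Rinv_0_lt_compat. Qed.

Lemma lim_le (v : nat -> R) L a b m : Un_cv v L ->
  (forall p, (m <= p)%nat -> Rabs (v p - a) <= b) -> Rabs (L - a) <= b.
Proof.
move=> hv hb; apply: Rnot_lt_le => hlt.
have [N hN] := hv (Rabs (L - a) - b) ltac:(lra).
have hp := hN (maxn N m) (leP (leq_maxl N m)).
have hq := hb (maxn N m) (leq_maxr N m).
rewrite /R_dist in hp.
have := Rabs_triang (L - v (maxn N m)) (v (maxn N m) - a).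
have -> : L - v (maxn N m) + (v (maxn N m) - a) = L - a by ring.
rewrite -Rabs_Ropp in hp.
rewrite (_ : - (v (maxn N m) - L) = L - v (maxn N m)) in hp; last ring.
lra.
Qed.

Lemma geom_zero e C k : 0 <= C -> 0 <= k < 1 -> (forall m, Rabs e <= C * k ^ m) -> e = 0.
Proof.
move=> C0 [k0 k1] h; case: (Req_dec e 0) => // ne.
have ep := Rabs_pos_lt _ ne.
have [N hN] := pow_lt_1_zero k ltac:(rewrite Rabs_right; lra) (Rabs e / (C + 1)) ltac:(apply: Rdiv_lt_0_compat; lra).
have := hN N (le_n N); rewrite Rabs_right; last by apply: Rle_ge; apply: pow_le.
move=> hk; have := h N.
have : C * k ^ N <= C * (Rabs e / (C + 1)) by apply: Rmult_le_compat_l => //; lra.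
have : C * (Rabs e / (C + 1)) < Rabs e.
  apply: (Rmult_lt_reg_r (C + 1)); first lra.
  have -> : C * (Rabs e / (C + 1)) * (C + 1) = C * Rabs e by field; lra.
  nra.
lra.
Qed.

Lemma fixpt N (Phi : vec N -> vec N) c rho k :
  0 <= rho -> 0 <= k < 1 ->
  (forall x, cball c rho x -> cball c rho (Phi x)) ->
  (forall x y r, 0 <= r -> cball c rho x -> cball c rho y -> (forall j, Rabs (x j - y j) <= r) ->
     forall j, Rabs (Phi x j - Phi y j) <= k * r) ->
  exists x, cball c rho x /\ Phi x = x.
Proof.
move=> r0 [k0 k1] hmap hcon.
pose u m := iter m Phi c.
have ub : forall m, cball c rho (u m).
  elim=> [|m IH]; first by move=> j; rewrite /u /= Rminus_diag Rabs_R0.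
  rewrite /u iterS; exact: hmap.
have step : forall m j, Rabs (u m.+1 j - u m j) <= k ^ m * (2 * rho).
  elim=> [|m IH] j.
    rewrite /= Rmult_1_l. have := hmap c (ub 0%nat) j. lra.
  have := hcon (u m.+1) (u m) (k ^ m * (2 * rho)) ltac:(apply: Rmult_le_pos; [apply: pow_le|]; lra)
    (ub _) (ub _) IH j.
  by rewrite /u !iterS /= Rmult_assoc.
have far : forall m p j, Rabs (u (m + p)%nat j - u m j) <= 2 * rho * (k ^ m - k ^ (m + p)) / (1 - k).
  move=> m; elim=> [|p IH] j.
    rewrite addn0 Rminus_diag Rabs_R0 Rminus_diag Rmult_0_r /Rdiv Rmult_0_l; lra.
  rewrite addnS.
  have := step (m + p)%nat j; have := IH j.
  have := Rabs_triang (u (m + p).+1 j - u (m + p)%nat j) (u (m + p)%nat j - u m j).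
  have -> : u (m + p).+1 j - u (m + p)%nat j + (u (m + p)%nat j - u m j) = u (m + p).+1 j - u m j by ring.
  have -> : 2 * rho * (k ^ m - k ^ (m + p).+1) / (1 - k) =
           2 * rho * (k ^ m - k ^ (m + p)) / (1 - k) + k ^ (m + p) * (2 * rho).
    rewrite /=; field; lra.
  lra.
have far' : forall m p j, (m <= p)%nat -> Rabs (u p j - u m j) <= 2 * rho * k ^ m / (1 - k).
  move=> m p j /subnKC <-.
  eapply Rle_trans; first exact: far.
  apply: Rmult_le_compat_r; first by apply: Rlt_le; apply: Rinv_0_lt_compat; lra.
  have := pow_le k (m + (p - m))%nat k0; nra.
have cau : forall j, Cauchy_crit (fun m => u m j).
  move=> j eps e0.
  have [N0 hN] := pow_lt_1_zero k ltac:(rewrite Rabs_right; lra) (eps * (1 - k) / (2 * (2 * rho + 1)))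
    ltac:(apply: Rdiv_lt_0_compat; nra).
  exists N0 => p q hp hq; rewrite /R_dist.
  have hk := hN N0 (le_n N0); rewrite Rabs_right in hk; last by apply: Rle_ge; apply: pow_le.
  have b : 2 * rho * k ^ N0 / (1 - k) < eps / 2.
    apply: (Rmult_lt_reg_r (1 - k)); first lra.
    have -> : 2 * rho * k ^ N0 / (1 - k) * (1 - k) = 2 * rho * k ^ N0 by field; lra.
    have : 2 * rho * k ^ N0 <= (2 * rho + 1) * k ^ N0 by have := pow_le k N0 k0; nra.
    have : (2 * rho + 1) * k ^ N0 < (2 * rho + 1) * (eps * (1 - k) / (2 * (2 * rho + 1))) by apply: Rmult_lt_compat_l; lra.
    have -> : (2 * rho + 1) * (eps * (1 - k) / (2 * (2 * rho + 1))) = eps / 2 * (1 - k) by field; lra.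
    lra.
  have h1 := far' N0 p j (introT leP hp). have h2 := far' N0 q j (introT leP hq).
  have := Rabs_triang (u p j - u N0 j) (u N0 j - u q j).
  rewrite -(Rabs_Ropp (u N0 j - u q j)).
  have -> : u p j - u N0 j + (u N0 j - u q j) = u p j - u q j by ring.
  have -> : - (u N0 j - u q j) = u q j - u N0 j by ring.
  lra.
pose l : vec N := fun j => proj1_sig (R_complete _ (cau j)).
have hl : forall j, Un_cv (fun m => u m j) (l j) by move=> j; exact: (proj2_sig (R_complete _ (cau j))).
have lb : cball c rho l.
  move=> j; apply: (@lim_le (fun m => u m j) (l j) (c j) rho 0%nat (hl j)) => p _; exact: ub.
have lu : forall m j, Rabs (l j - u m j) <= 2 * rho * k ^ m / (1 - k).
  move=> m j; apply: (@lim_le (fun m => u m j) (l j) (u m j) _ m (hl j)) => p hp; exact: far'.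
exists l; split => //.
apply: functional_extensionality => j.
apply: Rminus_diag_uniq.
apply: (@geom_zero _ (2 * (2 * rho / (1 - k))) k) => //.
  have : 0 < 1 - k by lra. move=> h1; apply: Rmult_le_pos; first lra. apply: Rdiv_le_0_compat; lra.
move=> m.
have c1 := hcon l (u m) (2 * rho * k ^ m / (1 - k)) ltac:(apply: Rdiv_le_0_compat; [have := pow_le k m k0; nra | lra]) lb (ub m) (fun j0 => lu m j0) j.
have c2 := lu m.+1 j.
have -> : Phi l j - l j = (Phi l j - u m.+1 j) + - (l j - u m.+1 j) by ring.
eapply Rle_trans; first exact: Rabs_triang.
rewrite Rabs_Ropp.
have -> : u m.+1 j = Phi (u m) j by rewrite /u iterS.
rewrite /= in c2.
set A := 2 * rho * k ^ m / (1 - k) in c1 c2 *.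
have A0 : 0 <= A by rewrite /A; apply: Rdiv_le_0_compat; [have := pow_le k m k0; nra | lra].
have -> : 2 * (2 * rho / (1 - k)) * k ^ m = 2 * A by rewrite /A; field; lra.
rewrite (_ : 2 * rho * (k * k ^ m) / (1 - k) = k * A) in c2; last by rewrite /A; field; lra.
try (rewrite (_ : u m.+1 j = Phi (u m) j) in c2; last by rewrite /u iterS).
have : k * A <= A by nra.
lra.
Qed.
Lemma fam_bound N (I : finType) (F : I -> vec N -> R) x0 :
  (forall i, cont_on (@everywhere N) (F i)) ->
  exists d B, 0 < d /\ 1 <= B /\ forall i y, cball x0 d y -> Rabs (F i y) <= B.
Proof.
move=> hc.
have [d [d0 hd]] := @fin_min I (fun i d => forall y, cball x0 d y -> Rabs (F i y - F i x0) <= 1)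
  (fun i d d' hdd H y hy => H y (fun j => Rle_trans _ _ _ (hy j) (proj2 hdd)))
  (fun i => @cont_cball N (F i) (hc i) x0 1 ltac:(lra)).
have [B [B1 hB]] := @fin_bound I (fun i => Rabs (F i x0) + 1).
exists d, B; split => //; split => // i y hy.
have := hd i y hy; have := hB i.
have := Rabs_triang (F i y - F i x0) (F i x0).
have -> : F i y - F i x0 + F i x0 = F i y by ring.
lra.
Qed.

Lemma local_bounds N (D1 : 'I_N -> vec N -> R) (D2 : 'I_N -> 'I_N -> vec N -> R)
  (D3 : 'I_N -> 'I_N -> 'I_N -> vec N -> R) x0 :
  (forall l, cont_on (@everywhere N) (D1 l)) ->
  (forall l m, cont_on (@everywhere N) (D2 l m)) ->
  (forall l m o, cont_on (@everywhere N) (D3 l m o)) ->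
  exists d B1 B2 B3, 0 < d /\ 1 <= B1 /\ 1 <= B2 /\ 1 <= B3 /\
    (forall l y, cball x0 d y -> Rabs (D1 l y) <= B1) /\
    (forall l m y, cball x0 d y -> Rabs (D2 l m y) <= B2) /\
    (forall l m o y, cball x0 d y -> Rabs (D3 l m o y) <= B3).
Proof.
move=> h1 h2 h3.
have [d1 [B1 [d10 [B11 hB1]]]] := @fam_bound N _ D1 x0 h1.
have [d2 [B2 [d20 [B21 hB2]]]] := @fam_bound N ('I_N * 'I_N)%type (fun p => D2 p.1 p.2) x0
   (fun p => h2 p.1 p.2).
have [d3 [B3 [d30 [B31 hB3]]]] := @fam_bound N ('I_N * 'I_N * 'I_N)%type
   (fun p => D3 p.1.1 p.1.2 p.2) x0 (fun p => h3 p.1.1 p.1.2 p.2).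
exists (Rmin d1 (Rmin d2 d3)), B1, B2, B3.
have m1 := Rmin_l d1 (Rmin d2 d3). have m2 := Rmin_r d1 (Rmin d2 d3).
have m3 := Rmin_l d2 d3. have m4 := Rmin_r d2 d3.
split; first by apply: Rmin_glb_lt => //; apply: Rmin_glb_lt.
do 3 (split => //).
split; first by move=> l y hy; apply: hB1 => j; have := hy j; lra.
split; first by move=> l m y hy; apply: (hB2 (l, m)) => j; have := hy j; lra.
by move=> l m o y hy; apply: (hB3 (l, m, o)) => j; have := hy j; lra.
Qed.

Definition Lx {N} (D2 : 'I_N -> 'I_N -> vec N -> R) (x0 : vec N) l (v : vec N) : R :=
  rsum (fun k => D2 l k x0 * v k).

Lemma Lx_bound N D2 (x0 : vec N) l v rho B :
  (forall k, Rabs (D2 l k x0) <= B) -> (forall k, Rabs (v k) <= rho) ->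
  Rabs (Lx D2 x0 l v) <= INR N * (B * rho).
Proof.
move=> hB hv; eapply Rle_trans; first exact: rsum_abs.
apply: rsum_le_const => k; rewrite Rabs_mult.
apply: Rmult_le_compat; try exact: Rabs_pos; [exact: hB | exact: hv].
Qed.

Lemma Lx_lin N D2 (x0 : vec N) l (u1 u2 u3 : vec N) c :
  Lx D2 x0 l (fun k => u1 k + u2 k - c * u3 k) = Lx D2 x0 l u1 + Lx D2 x0 l u2 - c * Lx D2 x0 l u3.
Proof.
rewrite /Lx -rsum_scal -rsum_plus -rsum_minus; apply: rsum_ext => k; ring.
Qed.
Lemma pack_dist n (q p q' p' : vec n) t t' r :
  (forall i, Rabs (q i - q' i) <= r) -> (forall i, Rabs (p i - p' i) <= r) -> Rabs (t - t') <= r ->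
  forall j, Rabs (pack q p t j - pack q' p' t' j) <= r.
Proof.
move=> hq hp ht j; case: (@idx_cases n j) => [[i ->]|[[i ->]| ->]].
- by rewrite !pack_q.
- by rewrite !pack_p.
- by rewrite !pack_t.
Qed.

Lemma part2 n (Hq Hp : vec n -> vec n -> R -> vec n)
  (D1 : 'I_(n + n + 1) -> vec (n + n + 1) -> R)
  (D2 : 'I_(n + n + 1) -> 'I_(n + n + 1) -> vec (n + n + 1) -> R)
  (D3 : 'I_(n + n + 1) -> 'I_(n + n + 1) -> 'I_(n + n + 1) -> vec (n + n + 1) -> R) :
  (forall y l m, derivable_pt_lim (fun s => D1 l (upd y m s)) (y m) (D2 l m y)) ->
  (forall y l m o, derivable_pt_lim (fun s => D2 l m (upd y o s)) (y o) (D3 l m o y)) ->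
  (forall l, cont_on (@everywhere _) (D1 l)) ->
  (forall l m, cont_on (@everywhere _) (D2 l m)) ->
  (forall l m o, cont_on (@everywhere _) (D3 l m o)) ->
  (forall q p t i, Hp q p t i = D1 (ip i) (pack q p t)) ->
  (forall q p t i, Hq q p t i = D1 (iq i) (pack q p t)) ->
  (forall (t0 a T : R) (alpha beta : vec n) (qt pt : R -> vec n),
     0 < T -> qt t0 = alpha -> pt t0 = beta ->
     (forall t i, t0 - T < t < t0 + T ->
        derivable_pt_lim (fun s => qt s i) t (Hp (qt t) (pt t) t i)) ->
     (forall t i, t0 - T < t < t0 + T ->
        derivable_pt_lim (fun s => pt s i) t (- Hq (qt t) (pt t) t i)) ->
     exists h0 r C : R, 0 < h0 /\ 0 < r /\
       (forall h, 0 < h < h0 ->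
          exists q P : vec n, vball alpha r q /\ vball beta r P /\
            step_eqs Hq Hp h t0 a alpha beta q P) /\
       (forall (h : R) (q P : vec n), 0 < h < h0 ->
          vball alpha r q -> vball beta r P ->
          step_eqs Hq Hp h t0 a alpha beta q P ->
          forall i,
            Rabs (step_Q Hp h t0 a q P i - qt (t0 + h) i) <= C * pow h 3 /\
            Rabs (P i - pt (t0 + h) i) <= C * pow h 3)).
Proof.
move=> hD2 hD3 hc1 hc2 hc3 eHp eHq t0 a T alpha beta qt pt T0 hq0 hp0 hqd hpd.
pose x0 := pack alpha beta t0.
have [d [B1 [B2 [B3 [d0 [B11 [B21 [B31 [hB1 [hB2 hB3]]]]]]]]]] :=
  @local_bounds _ D1 D2 D3 x0 hc1 hc2 hc3.
pose Mr := INR (n + n + 1).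
have Mr0 : 0 <= Mr by exact: pos_INR.
have x0K : cball x0 d x0 by move=> j; rewrite Rminus_diag Rabs_R0; lra.
have lipD1 : forall l x y rho, cball x0 d x -> cball x0 d y -> (forall j, Rabs (x j - y j) <= rho) ->
    Rabs (D1 l x - D1 l y) <= B2 * Mr * rho.
  move=> l; exact: (@lip _ (D1 l) (D2 l) x0 d B2 (fun y m => hD2 y l m) (fun m y hy => hB2 l m y hy)).
have tay : forall l x rho, 0 <= rho <= d -> (forall j, Rabs (x j - x0 j) <= rho) ->
    Rabs (D1 l x - D1 l x0 - Lx D2 x0 l (fun k => x k - x0 k)) <= (B3 * Mr * rho) * Mr * rho.
  move=> l; exact: (@taylor2 _ (D1 l) (D2 l) (D3 l) x0 d B3 (fun y m => hD2 y l m)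
     (fun y m o => hD3 y l m o) (fun m o y hy => hB3 l m o y hy)).
have Lb : forall l v rho, (forall k, Rabs (v k) <= rho) -> Rabs (Lx D2 x0 l v) <= Mr * (B2 * rho).
  move=> l v rho hv; apply: Lx_bound => // k; exact: hB2.
have t0in : t0 - T < t0 < t0 + T by lra.
have [Kq [Kq1 hKq]] := @fin_bound _ (fun i : 'I_n => Rmax (Rabs (Hp (qt t0) (pt t0) t0 i) + 1)
                                                    (Rabs (- Hq (qt t0) (pt t0) t0 i) + 1)).
have [eta [eta0 heta]] := @fin_min _ (fun i e => forall s, Rabs s < e ->
      Rabs (qt (t0 + s) i - alpha i) <= Kq * Rabs s /\ Rabs (pt (t0 + s) i - beta i) <= Kq * Rabs s)
  (fun i e e' hee H s hs => H s ltac:(lra))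
  (fun i => ltac:(
     have [e1 [e10 he1]] := @dpl_bound _ _ _ (hqd t0 i t0in);
     have [e2 [e20 he2]] := @dpl_bound _ _ _ (hpd t0 i t0in);
     exists (Rmin e1 e2); split; [exact: Rmin_glb_lt|];
     move=> s hs; have m1 := Rmin_l e1 e2; have m2 := Rmin_r e1 e2;
     have k1 := hKq i; have k2 := Rmax_l (Rabs (Hp (qt t0) (pt t0) t0 i) + 1) (Rabs (- Hq (qt t0) (pt t0) t0 i) + 1);
     have k3 := Rmax_r (Rabs (Hp (qt t0) (pt t0) t0 i) + 1) (Rabs (- Hq (qt t0) (pt t0) t0 i) + 1);
     have as0 := Rabs_pos s;
     rewrite -hq0 -hp0; have := he1 s ltac:(lra); have := he2 s ltac:(lra);
     move=> b2 b1; split; [apply: Rle_trans b1 _ | apply: Rle_trans b2 _];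
     apply: Rmult_le_compat_r => //; lra)).
pose K1 := B1 + Rabs a + Rabs (1 - a) + 1.
have K11 : 1 <= K1 by have := Rabs_pos a; have := Rabs_pos (1 - a); rewrite /K1; lra.
have cB : 0 < B2 * Mr + 1 by have := Rmult_le_pos B2 Mr ltac:(lra) Mr0; lra.
pose h0 := Rmin (Rmin eta T) (Rmin (d / (4 * K1)) (Rmin (1 / (B2 * Mr + 1)) (d / (Kq + 1)))).
have h0p : 0 < h0.
  apply: Rmin_glb_lt; apply: Rmin_glb_lt => //.
  - apply: Rdiv_lt_0_compat; lra.
  - apply: Rmin_glb_lt; apply: Rdiv_lt_0_compat; lra.
have hh0 : forall s, 0 <= s < h0 -> s < eta /\ s < T /\ 4 * K1 * s <= d /\ (B2 * Mr + 1) * s <= 1 /\ (Kq + 1) * s <= d.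
  move=> s [s0 sh].
  have m1 := Rmin_l (Rmin eta T) (Rmin (d / (4 * K1)) (Rmin (1 / (B2 * Mr + 1)) (d / (Kq + 1)))).
  have m2 := Rmin_r (Rmin eta T) (Rmin (d / (4 * K1)) (Rmin (1 / (B2 * Mr + 1)) (d / (Kq + 1)))).
  have m3 := Rmin_l eta T. have m4 := Rmin_r eta T.
  have m5 := Rmin_l (d / (4 * K1)) (Rmin (1 / (B2 * Mr + 1)) (d / (Kq + 1))).
  have m6 := Rmin_r (d / (4 * K1)) (Rmin (1 / (B2 * Mr + 1)) (d / (Kq + 1))).
  have m7 := Rmin_l (1 / (B2 * Mr + 1)) (d / (Kq + 1)).
  have m8 := Rmin_r (1 / (B2 * Mr + 1)) (d / (Kq + 1)).
  rewrite -/h0 in m1 m2.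
  split; first lra. split; first lra.
  split; last split.
  - have : s <= d / (4 * K1) by lra.
    move=> h; have := Rmult_le_compat_l (4 * K1) _ _ ltac:(lra) h.
    have -> : 4 * K1 * (d / (4 * K1)) = d by field; lra. done.
  - have : s <= 1 / (B2 * Mr + 1) by lra.
    move=> h; have := Rmult_le_compat_l (B2 * Mr + 1) _ _ ltac:(lra) h.
    have -> : (B2 * Mr + 1) * (1 / (B2 * Mr + 1)) = 1 by field; lra. done.
  - have : s <= d / (Kq + 1) by lra.
    move=> h; have := Rmult_le_compat_l (Kq + 1) _ _ ltac:(lra) h.
    have -> : (Kq + 1) * (d / (Kq + 1)) = d by field; lra. done.
pose z (sg : R) := pack (qt (t0 + sg)) (pt (t0 + sg)) (t0 + sg).
have zK : forall sg, 0 <= sg < h0 -> (forall j, Rabs (z sg j - x0 j) <= Kq * sg) /\ cball x0 d (z sg).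
  move=> sg hsg; have [h1 [h2 [h3 [h4 h5]]]] := hh0 sg hsg.
  have as0 : Rabs sg = sg by rewrite Rabs_right; lra.
  have zd : forall j, Rabs (z sg j - x0 j) <= Kq * sg.
    move=> j; apply: pack_dist.
    - move=> i; have := heta i sg ltac:(lra); rewrite as0; by case.
    - move=> i; have := heta i sg ltac:(lra); rewrite as0; by case.
    - have -> : t0 + sg - t0 = sg by ring. rewrite as0; nra.
  split => // j; have := zd j; nra.
have qder : forall sg, 0 <= sg < h0 -> forall i,
    derivable_pt_lim (fun s => qt (t0 + s) i) sg (D1 (ip i) (z sg)).
  move=> sg hsg i; have [h1 [h2 _]] := hh0 sg hsg.
  apply: (@dpl_shift (fun s => qt s i)); rewrite /z -eHp; apply: hqd; lra.
have pder : forall sg, 0 <= sg < h0 -> forall i,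
    derivable_pt_lim (fun s => pt (t0 + s) i) sg (- D1 (iq i) (z sg)).
  move=> sg hsg i; have [h1 [h2 _]] := hh0 sg hsg.
  apply: (@dpl_shift (fun s => pt s i)); rewrite /z -eHq; apply: hpd; lra.
have LcP : 0 <= B2 * Mr * Kq by apply: Rmult_le_pos; [apply: Rmult_le_pos|]; lra.
have e1 : forall s, 0 <= s < h0 -> forall i,
    Rabs (qt (t0 + s) i - alpha i - s * D1 (ip i) x0) <= (B2 * Mr * Kq) * (s * s).
  move=> s hs i.
  apply: (@ode1 (fun sg => qt (t0 + sg) i) (fun sg => D1 (ip i) (z sg))) => //; try lra.
  - move=> sg hsg; apply: qder; lra.
  - by rewrite Rplus_0_r hq0.
  - move=> sg hsg; have [zd zk] := zK sg ltac:(lra).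
    rewrite Rmult_assoc; exact: lipD1.
have e2 : forall s, 0 <= s < h0 -> forall i,
    Rabs (pt (t0 + s) i - beta i - s * (- D1 (iq i) x0)) <= (B2 * Mr * Kq) * (s * s).
  move=> s hs i.
  apply: (@ode1 (fun sg => pt (t0 + sg) i) (fun sg => - D1 (iq i) (z sg))) => //; try lra.
  - move=> sg hsg; apply: pder; lra.
  - by rewrite Rplus_0_r hp0.
  - move=> sg hsg; have [zd zk] := zK sg ltac:(lra).
    rewrite (_ : - D1 (iq i) (z sg) - - D1 (iq i) x0 = - (D1 (iq i) (z sg) - D1 (iq i) x0)); last ring.
    rewrite Rabs_Ropp Rmult_assoc; exact: lipD1.
pose dv := pack (fun i => D1 (ip i) x0) (fun i => - D1 (iq i) x0) 1.
have zd2 : forall s, 0 <= s < h0 -> forall j,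
    Rabs (z s j - x0 j - s * dv j) <= (B2 * Mr * Kq) * (s * s).
  move=> s hs j; case: (@idx_cases n j) => [[i ->]|[[i ->]| ->]].
  - by rewrite /z /x0 /dv !pack_q; apply: e1.
  - by rewrite /z /x0 /dv !pack_p; apply: e2.
  - rewrite /z /x0 /dv !pack_t.
    rewrite (_ : t0 + s - t0 - s * 1 = 0); last ring.
    rewrite Rabs_R0; apply: Rmult_le_pos => //; nra.
pose Ce := B3 * Mr * Kq * Mr * Kq + Mr * (B2 * (B2 * Mr * Kq)).
have Ce0 : 0 <= Ce.
  rewrite /Ce; apply: Rplus_le_le_0_compat.
  - repeat apply: Rmult_le_pos; lra.
  - repeat apply: Rmult_le_pos; lra.
have Gb : forall l s, 0 <= s < h0 ->
    Rabs (D1 l (z s) - D1 l x0 - s * Lx D2 x0 l dv) <= Ce * (s * s).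
  move=> l s hs; have [zd zk] := zK s hs; have [_ [_ [h3 [_ h5]]]] := hh0 s hs.
  have t1 := tay l (z s) (Kq * s) ltac:(split; nra) zd.
  have t2 := Lb l (fun k => z s k - x0 k - s * dv k) _ (zd2 s hs).
  have -> : D1 l (z s) - D1 l x0 - s * Lx D2 x0 l dv =
     (D1 l (z s) - D1 l x0 - Lx D2 x0 l (fun k => z s k - x0 k)) +
     Lx D2 x0 l (fun k => z s k - x0 k - s * dv k).
    rewrite /Lx -rsum_scal (@rsum_ext _ (fun k => D2 l k x0 * (z s k - x0 k - s * dv k))
       (fun k => D2 l k x0 * (z s k - x0 k) - s * (D2 l k x0 * dv k))); last by move=> k; ring.
    rewrite rsum_minus; ring.
  eapply Rle_trans; first exact: Rabs_triang.
  rewrite /Ce; nra.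
have E1 : forall s, 0 <= s < h0 -> forall i,
    Rabs (qt (t0 + s) i - alpha i - s * D1 (ip i) x0 - s * s / 2 * Lx D2 x0 (ip i) dv) <= Ce * (s * s * s).
  move=> s hs i.
  apply: (@ode2 (fun sg => qt (t0 + sg) i) (fun sg => D1 (ip i) (z sg))) => //; try lra.
  - move=> sg hsg; apply: qder; lra.
  - by rewrite Rplus_0_r hq0.
  - move=> sg hsg; apply: Gb; lra.
have E2 : forall s, 0 <= s < h0 -> forall i,
    Rabs (pt (t0 + s) i - beta i - s * (- D1 (iq i) x0) - s * s / 2 * (- Lx D2 x0 (iq i) dv)) <= Ce * (s * s * s).
  move=> s hs i.
  apply: (@ode2 (fun sg => pt (t0 + sg) i) (fun sg => - D1 (iq i) (z sg))) => //; try lra.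
  - move=> sg hsg; apply: pder; lra.
  - by rewrite Rplus_0_r hp0.
  - move=> sg hsg.
    rewrite (_ : - D1 (iq i) (z sg) - - D1 (iq i) x0 - sg * - Lx D2 x0 (iq i) dv =
      - (D1 (iq i) (z sg) - D1 (iq i) x0 - sg * Lx D2 x0 (iq i) dv)); last ring.
    rewrite Rabs_Ropp; apply: Gb; lra.
pose r := d / 2. pose rho0 := d / 4.
pose Cs := B3 * Mr * K1 * Mr * K1 + Mr * (B2 * (B2 * Mr * K1)).
have Cs0 : 0 <= Cs.
  rewrite /Cs; apply: Rplus_le_le_0_compat; repeat apply: Rmult_le_pos; lra.
have hcon : forall h, 0 < h < h0 -> Rabs a * h <= d / 4 /\ Rabs (1 - a) * h <= d / 4 /\
     B1 * h <= d / 4 /\ K1 * h <= d /\ h * (B2 * Mr) <= 1.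
  move=> h [hp hh]; have [_ [_ [h3 [h4 _]]]] := hh0 h (conj (Rlt_le _ _ hp) hh).
  have pa := Rmult_le_pos _ _ (Rabs_pos a) (Rlt_le _ _ hp).
  have pa' := Rmult_le_pos _ _ (Rabs_pos (1 - a)) (Rlt_le _ _ hp).
  have pb : 0 <= B1 * h by apply: Rmult_le_pos; lra.
  have e3 : 4 * K1 * h = 4 * (B1 * h) + 4 * (Rabs a * h) + 4 * (Rabs (1 - a) * h) + 4 * h by rewrite /K1; ring.
  have e4 : (B2 * Mr + 1) * h = h * (B2 * Mr) + h by ring.
  have e5 : K1 * h = B1 * h + Rabs a * h + Rabs (1 - a) * h + h by rewrite /K1; ring.
  repeat split; lra.
exists h0, r, (Cs + Ce); split => //; split; first by rewrite /r; lra.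
split.
  move=> h hh; have [ha [ha' [hb1 [hk1 hc]]]] := hcon h hh.
  have hp : 0 < h by case: hh.
  have w1K : forall q, cball alpha rho0 q -> cball x0 d (pack q beta (t0 + a * h)).
    move=> q hq; apply: pack_dist.
    - move=> i; have := hq i; rewrite /rho0; lra.
    - move=> i; rewrite Rminus_diag Rabs_R0; lra.
    - rewrite (_ : t0 + a * h - t0 = a * h); last ring.
      rewrite Rabs_mult (Rabs_right h); lra.
  pose Phi := fun (q : vec n) i => alpha i + h / 2 * D1 (ip i) (pack q beta (t0 + a * h)).
  have [q [hqb hqf]] := @fixpt n Phi alpha rho0 (1 / 2) ltac:(rewrite /rho0; lra) ltac:(lra)
    ltac:(move=> x hx i; rewrite /Phi;
          rewrite (_ : alpha i + h / 2 * D1 (ip i) (pack x beta (t0 + a * h)) - alpha i =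
                       h / 2 * D1 (ip i) (pack x beta (t0 + a * h))); last ring;
          rewrite Rabs_mult (Rabs_right (h / 2)); last lra;
          have := hB1 (ip i) _ (w1K x hx); rewrite /rho0; nra)
    ltac:(move=> x y r' hr' hx hy hxy i; rewrite /Phi;
          rewrite (_ : alpha i + h / 2 * D1 (ip i) (pack x beta (t0 + a * h)) -
                        (alpha i + h / 2 * D1 (ip i) (pack y beta (t0 + a * h))) =
                       h / 2 * (D1 (ip i) (pack x beta (t0 + a * h)) - D1 (ip i) (pack y beta (t0 + a * h)))); last ring;
          rewrite Rabs_mult (Rabs_right (h / 2)); last lra;
          have := lipD1 (ip i) _ _ r' (w1K x hx) (w1K y hy)
             (@pack_dist n x beta y beta (t0 + a * h) (t0 + a * h) r' hxy
                (fun j => ltac:(rewrite Rminus_diag Rabs_R0; lra))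
                ltac:(rewrite Rminus_diag Rabs_R0; lra));
          move=> hl; have := Rabs_pos (D1 (ip i) (pack x beta (t0 + a * h)) - D1 (ip i) (pack y beta (t0 + a * h)));
          nra).
  have w2K : forall P, cball beta rho0 P -> cball x0 d (pack q P (t0 + (1 - a) * h)).
    move=> P hP; apply: pack_dist.
    - move=> i; have := hqb i; rewrite /rho0; lra.
    - move=> i; have := hP i; rewrite /rho0; lra.
    - rewrite (_ : t0 + (1 - a) * h - t0 = (1 - a) * h); last ring.
      rewrite Rabs_mult (Rabs_right h); lra.
  pose pb := fun i => beta i - h / 2 * D1 (iq i) (pack q beta (t0 + a * h)).
  pose Psi := fun (P : vec n) i => pb i - h / 2 * D1 (iq i) (pack q P (t0 + (1 - a) * h)).
  have [P [hPb hPf]] := @fixpt n Psi beta rho0 (1 / 2) ltac:(rewrite /rho0; lra) ltac:(lra)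
    ltac:(move=> x hx i; rewrite /Psi /pb;
          rewrite (_ : beta i - h / 2 * D1 (iq i) (pack q beta (t0 + a * h)) -
                         h / 2 * D1 (iq i) (pack q x (t0 + (1 - a) * h)) - beta i =
                       - (h / 2 * D1 (iq i) (pack q beta (t0 + a * h))) +
                       - (h / 2 * D1 (iq i) (pack q x (t0 + (1 - a) * h)))); last ring;
          eapply Rle_trans; first exact: Rabs_triang;
          rewrite !Rabs_Ropp !(Rabs_mult (h / 2)) (Rabs_right (h / 2)); last lra;
          have := hB1 (iq i) _ (w1K q hqb); have := hB1 (iq i) _ (w2K x hx); rewrite /rho0; nra)
    ltac:(move=> x y r' hr' hx hy hxy i; rewrite /Psi;
          rewrite (_ : pb i - h / 2 * D1 (iq i) (pack q x (t0 + (1 - a) * h)) -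
                        (pb i - h / 2 * D1 (iq i) (pack q y (t0 + (1 - a) * h))) =
                       - (h / 2 * (D1 (iq i) (pack q x (t0 + (1 - a) * h)) - D1 (iq i) (pack q y (t0 + (1 - a) * h))))); last ring;
          rewrite Rabs_Ropp Rabs_mult (Rabs_right (h / 2)); last lra;
          have := lipD1 (iq i) _ _ r' (w2K x hx) (w2K y hy)
             (@pack_dist n q x q y (t0 + (1 - a) * h) (t0 + (1 - a) * h) r' (fun j => ltac:(rewrite Rminus_diag Rabs_R0; lra)) hxy
                ltac:(rewrite Rminus_diag Rabs_R0; lra));
          move=> hl; have := Rabs_pos (D1 (iq i) (pack q x (t0 + (1 - a) * h)) - D1 (iq i) (pack q y (t0 + (1 - a) * h)));
          nra).
  exists q, P; split; [|split].
  - move=> i; have := hqb i; rewrite /rho0 /r; lra.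
  - move=> i; have := hPb i; rewrite /rho0 /r; lra.
  - split => i.
    + rewrite eHp; have := f_equal (fun f => f i) hqf; rewrite /Phi /=; by move=> <-.
    + rewrite /step_p !eHq; have := f_equal (fun f => f i) hPf; rewrite /Psi /pb /=; by move=> <-.
move=> h q P hh hqv hPv [sq sP] i.
have [ha [ha' [hb1 [hk1 hc]]]] := hcon h hh.
have hp : 0 < h by case: hh.
have hh' : 0 <= h < h0 by case: hh => *; split; lra.
have ah : Rabs h = h by rewrite Rabs_right; lra.
pose w1 := pack q beta (t0 + a * h).
pose w2 := pack q P (t0 + (1 - a) * h).
have sq' : forall j, q j - alpha j = h / 2 * D1 (ip j) w1.
  move=> j; rewrite (sq j) eHp /w1; field.
have sP' : forall j, P j - beta j = - (h / 2 * D1 (iq j) w1) - h / 2 * D1 (iq j) w2.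
  move=> j; rewrite (sP j) /step_p !eHq /w1 /w2; field.
have w1K : cball x0 d w1.
  apply: pack_dist.
  - move=> j; have := hqv j; rewrite /r; lra.
  - move=> j; rewrite Rminus_diag Rabs_R0; lra.
  - rewrite (_ : t0 + a * h - t0 = a * h); last field. rewrite Rabs_mult ah; lra.
have w2K : cball x0 d w2.
  apply: pack_dist.
  - move=> j; have := hqv j; rewrite /r; lra.
  - move=> j; have := hPv j; rewrite /r; lra.
  - rewrite (_ : t0 + (1 - a) * h - t0 = (1 - a) * h); last field. rewrite Rabs_mult ah; lra.
have qa : forall j, Rabs (q j - alpha j) <= B1 * h.
  move=> j; rewrite sq' Rabs_mult (Rabs_right (h / 2)); last lra.
  have := hB1 (ip j) _ w1K; have := Rabs_pos (D1 (ip j) w1); nra.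
have Pb : forall j, Rabs (P j - beta j) <= B1 * h.
  move=> j; rewrite sP'.
  eapply Rle_trans; first exact: Rabs_triang.
  rewrite Rabs_Ropp Rabs_Ropp !(Rabs_mult (h / 2)) (Rabs_right (h / 2)); last lra.
  have := hB1 (iq j) _ w1K; have := hB1 (iq j) _ w2K; nra.
have K1b : B1 * h <= K1 * h /\ Rabs a * h <= K1 * h /\ Rabs (1 - a) * h <= K1 * h.
  rewrite /K1; have := Rabs_pos a; have := Rabs_pos (1 - a); split; [|split]; nra.
have w1d : forall k, Rabs (w1 k - x0 k) <= K1 * h.
  apply: pack_dist.
  - move=> j; have := qa j; lra.
  - move=> j; rewrite Rminus_diag Rabs_R0; nra.
  - rewrite (_ : t0 + a * h - t0 = a * h); last field. rewrite Rabs_mult ah; lra.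
have w2d : forall k, Rabs (w2 k - x0 k) <= K1 * h.
  apply: pack_dist.
  - move=> j; have := qa j; lra.
  - move=> j; have := Pb j; lra.
  - rewrite (_ : t0 + (1 - a) * h - t0 = (1 - a) * h); last field. rewrite Rabs_mult ah; lra.
pose v := fun k => (w1 k - x0 k) + (w2 k - x0 k) - h * dv k.
have vb : forall k, Rabs (v k) <= h * (B2 * Mr * (K1 * h)).
  have l1 := fun l => lipD1 l _ _ _ w1K x0K w1d.
  have l2 := fun l => lipD1 l _ _ _ w2K x0K w2d.
  have hx0q : forall j, x0 (iq j) = alpha j by move=> j; exact: pack_q.
  have hx0p : forall j, x0 (ip j) = beta j by move=> j; exact: pack_p.
  have hx0t : x0 it = t0 by exact: pack_t.
  move=> k; rewrite /v; case: (@idx_cases n k) => [[j ->]|[[j ->]| ->]].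
  - rewrite /w1 /w2 /dv !pack_q hx0q.
    rewrite (_ : q j - alpha j + (q j - alpha j) - h * D1 (ip j) x0 =
                 h * (D1 (ip j) w1 - D1 (ip j) x0)); last by rewrite sq'; field.
    rewrite Rabs_mult ah; apply: Rmult_le_compat_l; [lra | exact: l1].
  - rewrite /w1 /w2 /dv !pack_p hx0p.
    rewrite (_ : beta j - beta j + (P j - beta j) - h * - D1 (iq j) x0 =
                 - (h / 2 * (D1 (iq j) w1 - D1 (iq j) x0)) - h / 2 * (D1 (iq j) w2 - D1 (iq j) x0)); last by rewrite sP'; field.
    eapply Rle_trans; first exact: Rabs_triang.
    rewrite Rabs_Ropp Rabs_Ropp !(Rabs_mult (h / 2)) (Rabs_right (h / 2)); last lra.
    have := l1 (iq j); have := l2 (iq j); nra.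
  - rewrite /w1 /w2 /dv !pack_t hx0t.
    rewrite (_ : t0 + a * h - t0 + (t0 + (1 - a) * h - t0) - h * 1 = 0); last field.
    rewrite Rabs_R0; apply: Rmult_le_pos; first lra.
    repeat apply: Rmult_le_pos; lra.
have kb : 0 <= K1 * h <= d by split; nra.
have core : forall l, Rabs ((D1 l w1 - D1 l x0 - Lx D2 x0 l (fun k => w1 k - x0 k)) +
                            (D1 l w2 - D1 l x0 - Lx D2 x0 l (fun k => w2 k - x0 k)) +
                            Lx D2 x0 l v) <= 2 * Cs * (h * h).
  move=> l.
  have t1 := tay l w1 _ kb w1d. have t2 := tay l w2 _ kb w2d.
  have t3 := Lb l v _ vb.
  eapply Rle_trans; first exact: Rabs_triang.
  eapply Rle_trans; first (apply: Rplus_le_compat_r; exact: Rabs_triang).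
  rewrite /Cs.
  have : Mr * (B2 * (h * (B2 * Mr * (K1 * h)))) <= 2 * (Mr * (B2 * (B2 * Mr * K1))) * (h * h).
    have : 0 <= Mr * (B2 * (B2 * Mr * K1)) * (h * h) by repeat apply: Rmult_le_pos; lra.
    move=> *; nra.
  have : B3 * Mr * (K1 * h) * Mr * (K1 * h) = B3 * Mr * K1 * Mr * K1 * (h * h) by field.
  lra.
have Lvexp : forall l, Lx D2 x0 l v = Lx D2 x0 l (fun k => w1 k - x0 k) + Lx D2 x0 l (fun k => w2 k - x0 k) - h * Lx D2 x0 l dv.
  move=> l; rewrite /v; exact: Lx_lin.
have p3 : pow h 3 = h * h * h by rewrite /=; field.
split.
- have A : Rabs (step_Q Hp h t0 a q P i - alpha i - h * D1 (ip i) x0 - h * h / 2 * Lx D2 x0 (ip i) dv)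
            <= Cs * (h * h * h).
    rewrite /step_Q eHp -/w2.
    rewrite (_ : q i + h / 2 * D1 (ip i) w2 - alpha i - h * D1 (ip i) x0 - h * h / 2 * Lx D2 x0 (ip i) dv =
       h / 2 * ((D1 (ip i) w1 - D1 (ip i) x0 - Lx D2 x0 (ip i) (fun k => w1 k - x0 k)) +
                (D1 (ip i) w2 - D1 (ip i) x0 - Lx D2 x0 (ip i) (fun k => w2 k - x0 k)) +
                Lx D2 x0 (ip i) v)); last first.
      rewrite Lvexp.
      have := sq' i. move=> e; rewrite (_ : q i = alpha i + h / 2 * D1 (ip i) w1); last lra.
      field.
    rewrite Rabs_mult (Rabs_right (h / 2)); last lra.
    have := core (ip i); have := Rabs_pos ((D1 (ip i) w1 - D1 (ip i) x0 - Lx D2 x0 (ip i) (fun k => w1 k - x0 k)) +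
                (D1 (ip i) w2 - D1 (ip i) x0 - Lx D2 x0 (ip i) (fun k => w2 k - x0 k)) +
                Lx D2 x0 (ip i) v).
    move=> *; nra.
  have B := E1 h hh' i.
  rewrite p3.
  rewrite (_ : step_Q Hp h t0 a q P i - qt (t0 + h) i =
     (step_Q Hp h t0 a q P i - alpha i - h * D1 (ip i) x0 - h * h / 2 * Lx D2 x0 (ip i) dv)
     - (qt (t0 + h) i - alpha i - h * D1 (ip i) x0 - h * h / 2 * Lx D2 x0 (ip i) dv)); last field.
  eapply Rle_trans; first exact: Rabs_triang. rewrite Rabs_Ropp. lra.
- have A : Rabs (P i - beta i - h * (- D1 (iq i) x0) - h * h / 2 * (- Lx D2 x0 (iq i) dv))
            <= Cs * (h * h * h).
    rewrite (_ : P i - beta i - h * (- D1 (iq i) x0) - h * h / 2 * (- Lx D2 x0 (iq i) dv) =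
       - (h / 2 * ((D1 (iq i) w1 - D1 (iq i) x0 - Lx D2 x0 (iq i) (fun k => w1 k - x0 k)) +
                (D1 (iq i) w2 - D1 (iq i) x0 - Lx D2 x0 (iq i) (fun k => w2 k - x0 k)) +
                Lx D2 x0 (iq i) v))); last first.
      rewrite Lvexp.
      have := sP' i. move=> e; rewrite (_ : P i = beta i - h / 2 * D1 (iq i) w1 - h / 2 * D1 (iq i) w2); last lra.
      field.
    rewrite Rabs_Ropp Rabs_mult (Rabs_right (h / 2)); last lra.
    have := core (iq i); have := Rabs_pos ((D1 (iq i) w1 - D1 (iq i) x0 - Lx D2 x0 (iq i) (fun k => w1 k - x0 k)) +
                (D1 (iq i) w2 - D1 (iq i) x0 - Lx D2 x0 (iq i) (fun k => w2 k - x0 k)) +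
                Lx D2 x0 (iq i) v).
    move=> *; nra.
  have B := E2 h hh' i.
  rewrite p3.
  rewrite (_ : P i - pt (t0 + h) i =
     (P i - beta i - h * (- D1 (iq i) x0) - h * h / 2 * (- Lx D2 x0 (iq i) dv))
     - (pt (t0 + h) i - beta i - h * (- D1 (iq i) x0) - h * h / 2 * (- Lx D2 x0 (iq i) dv))); last field.
  eapply Rle_trans; first exact: Rabs_triang. rewrite Rabs_Ropp. lra.
Qed.

Theorem mainTheorem11 (n : nat) (H : vec n -> vec n -> R -> R)
    (Hq Hp : vec n -> vec n -> R -> vec n)
    (HC3 : Ck_on (@everywhere (n + n + 1)) 3 (Hpack H))
    (HHq : forall q p t i, derivable_pt_lim (fun s => H (upd q i s) p t) (q i) (Hq q p t i))
    (HHp : forall q p t i, derivable_pt_lim (fun s => H q (upd p i s) t) (p i) (Hp q p t i)) :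
  (* (i) symplecticity *)
  (forall (h t0 a : R) (U : vec (n + n) -> Prop) (qf Pf : vec (n + n) -> vec n),
     0 < h -> is_open U ->
     (forall i, Ck_on U 1 (fun z => qf z i)) ->
     (forall i, Ck_on U 1 (fun z => Pf z i)) ->
     (forall z, U z ->
        step_eqs Hq Hp h t0 a (fst_half z) (snd_half z) (qf z) (Pf z)) ->
     forall z, U z -> forall u v : vec (n + n),
       exists dQu dQv dPu dPv : vec n,
         (forall i, dirder (fun w => step_Q Hp h t0 a (qf w) (Pf w) i) z u (dQu i)) /\
         (forall i, dirder (fun w => step_Q Hp h t0 a (qf w) (Pf w) i) z v (dQv i)) /\
         (forall i, dirder (fun w => Pf w i) z u (dPu i)) /\
         (forall i, dirder (fun w => Pf w i) z v (dPv i)) /\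
         rsum (fun i => dPu i * dQv i - dPv i * dQu i) =
         rsum (fun i => snd_half u i * fst_half v i - snd_half v i * fst_half u i)) /\
  (* (ii) second order accuracy *)
  (forall (t0 a T : R) (alpha beta : vec n) (qt pt : R -> vec n),
     0 < T -> qt t0 = alpha -> pt t0 = beta ->
     (forall t i, t0 - T < t < t0 + T ->
        derivable_pt_lim (fun s => qt s i) t (Hp (qt t) (pt t) t i)) ->
     (forall t i, t0 - T < t < t0 + T ->
        derivable_pt_lim (fun s => pt s i) t (- Hq (qt t) (pt t) t i)) ->
     exists h0 r C : R, 0 < h0 /\ 0 < r /\
       (forall h, 0 < h < h0 ->
          exists q P : vec n, vball alpha r q /\ vball beta r P /\
            step_eqs Hq Hp h t0 a alpha beta q P) /\
       (forall (h : R) (q P : vec n), 0 < h < h0 ->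
          vball alpha r q -> vball beta r P ->
          step_eqs Hq Hp h t0 a alpha beta q P ->
          forall i,
            Rabs (step_Q Hp h t0 a q P i - qt (t0 + h) i) <= C * pow h 3 /\
            Rabs (P i - pt (t0 + h) i) <= C * pow h 3)).
Proof.
have [D1 [D2 [D3 [hD1 [hD2 [hD3 [hc1 [hc2 hc3]]]]]]]] := @C3_struct _ (Hpack H) HC3.
have eHp := @Hp_id n H Hp D1 HHp hD1.
have eHq := @Hq_id n H Hq D1 HHq hD1.
have hsym : forall l m y, D2 l m y = D2 m l y.
  move=> l m y; exact: (@schwarz _ (Hpack H) D1 D2 hD1 hD2 hc2 l m y).
split.
- exact: (@part1 n Hq Hp D1 D2 hD2 hc2 hsym eHp eHq).
- exact: (@part2 n Hq Hp D1 D2 D3 hD2 hD3 hc1 hc2 hc3 eHp eHq).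
Qed.
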